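(* Let $s\ge1$ and $m\ge2$, and let $\Omega_m^1=\frac2\pi\sum_{k=1}^{m-1}\frac1{2k+1}$. For a trigonometric polynomial $h(w)=\sum_{n\ge0}b_n\overline w^n$ (finitely many $b_n\in\mathbb R$ nonzero), $$L_\Omega h(w):=\frac{d}{dt}\Big|_{t=0}F_1(\Omega,th)(w)=\frac{\Omega b_0}{2}i(w-\overline w)+\frac i2\sum_{n\ge1}(n+1)\big(\Omega-\Omega_{n+1}^1\big)b_n\big(w^{n+1}-\overline w^{n+1}\big).$$ Moreover: (1) for every $\Omega\in\mathbb R$, $L_\Omega$ extends to a continuous operator $L_\Omega:B^s(\mathbb T)\to B^{s-1}_{\mathrm{Log}}(\mathbb T)$; (2) the kernel of $L_\Omega$ on $B^s(\mathbb T)$ is non-trivial if and only if $\Omega\in\mathcal S_1=\{\Omega_m^1:m\ge2\}$, and for $\Omega=\Omega_m^1$ it is one-dimensional, generated by $v_m(w)=\overline w^{m-1}$; (3) the range of $L_{\Omega_m^1}$ is closed in $B^{s-1}_{\mathrm{Log}}(\mathbb T)$, of co-dimension one, and equals $\{g\in B^{s-1}_{\mathrm{Log}}(\mathbb T): g(w)=i\sum_{n\ge1,n\ne m}g_n(w^n-\overline w^n),\ g_n\in\mathbb R\}$; (4) (transversality) $\partial_\Omega L_\Omega v_m\big|_{\Omega=\Omega_m^1}\notin R(L_{\Omega_m^1})$, where $\partial_\Omega L_\Omega h(w)=\operatorname{Im}\{\overline{h'(w)}+\overline w h(w)\}$.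
   Context: This concerns the SQG case $\alpha=1$. $\mathbb T$ unit circle; $\int_{\mathbb T}\dots d\tau$ complex line integral; $\phi'=d\phi/dw$. The modified boundary functional is $G_1(\Omega,\phi)(w)=\operatorname{Im}\Big\{\Big(\Omega\phi(w)-\frac{1}{2\pi i}\int_{\mathbb T}\frac{\tau\phi'(\tau)-w\phi'(w)}{|\phi(w)-\phi(\tau)|}\frac{d\tau}{\tau}\Big)\frac{\overline{\phi'(w)}}{w}\Big\}$, $w\in\mathbb T$, and $F_1(\Omega,f)(w)=G_1(\Omega,w+f(w))$. Spaces: $B^s(\mathbb T)=\{f(w)=\sum_{n\ge0}b_n\overline w^n: b_n\in\mathbb R,\ \|f\|_{B^s}=|b_0|+\sum_{n\ge1}n^s|b_n|<\infty\}$ and $B^{s}_{\mathrm{Log}}(\mathbb T)=\{g(w)=i\sum_{n\ge1}g_n(w^n-\overline w^n): g_n\in\mathbb R,\ \|g\|_{B^s_{\mathrm{Log}}}=\sum_{n\ge1}\frac{n^s}{1+\ln n}|g_n|<\infty\}$. For $n\ge2$, $\Omega_n^1=\frac2\pi\sum_{k=1}^{n-1}\frac1{2k+1}$. *)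

(* Defs.v *)
From Stdlib Require Import Reals Lra Lia ClassicalEpsilon.
Open Scope R_scope.

Record C : Type := Cmk { Cre : R ; Cim : R }.

Definition CR (x : R) : C := Cmk x 0.
Definition Ci : C := Cmk 0 1.
Definition Cadd (z u : C) : C := Cmk (Cre z + Cre u) (Cim z + Cim u).
Definition Copp (z : C) : C := Cmk (- Cre z) (- Cim z).
Definition Csub (z u : C) : C := Cadd z (Copp u).
Definition Cmul (z u : C) : C :=
  Cmk (Cre z * Cre u - Cim z * Cim u) (Cre z * Cim u + Cim z * Cre u).
Definition Cscal (r : R) (z : C) : C := Cmk (r * Cre z) (r * Cim z).
Definition Cconj (z : C) : C := Cmk (Cre z) (- Cim z).
Definition Cnorm (z : C) : R := sqrt (Cre z * Cre z + Cim z * Cim z).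
Definition Cinv (z : C) : C :=
  let d := Cre z * Cre z + Cim z * Cim z in Cmk (Cre z / d) (- Cim z / d).
Definition Cdiv (z u : C) : C := Cmul z (Cinv u).
Fixpoint Cpow (z : C) (n : nat) : C :=
  match n with O => CR 1 | S k => Cmul z (Cpow z k) end.
Definition Cexpi (th : R) : C := Cmk (cos th) (sin th).
Fixpoint Csum (f : nat -> C) (N : nat) : C :=
  match N with O => f O | S k => Cadd (Csum f k) (f (S k)) end.

(* Riemann integral of a real function (value when it exists; arbitrary otherwise) *)
Definition RInt (f : R -> R) (a b : R) : R :=
  epsilon (inhabits 0)
    (fun l => exists pr : Riemann_integrable f a b, RiemannInt pr = l).
(* complex line integral over the unit circle (counterclockwise):
   int_T g(tau) dtau = int_0^{2pi} g(e^{i a}) i e^{i a} da *)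
Definition Tint (g : C -> C) : C :=
  let F := fun a => Cmul (g (Cexpi a)) (Cmul Ci (Cexpi a)) in
  Cmk (RInt (fun a => Cre (F a)) 0 (2 * PI)) (RInt (fun a => Cim (F a)) 0 (2 * PI)).

(* phi and its complex derivative dphi are given as functions on T *)
Definition G1 (Om : R) (phi dphi : C -> C) (w : C) : R :=
  let integrand := fun tau =>
    Cdiv (Cscal (/ Cnorm (Csub (phi w) (phi tau)))
                (Csub (Cmul tau (dphi tau)) (Cmul w (dphi w))))
         tau in
  let I := Cdiv (Tint integrand) (Cmul (CR (2 * PI)) Ci) in
  Cim (Cmul (Csub (Cscal Om (phi w)) I) (Cdiv (Cconj (dphi w)) w)).

Definition tp_eval (N : nat) (b : nat -> R) (w : C) : C :=
  Csum (fun n => Cscal (b n) (Cpow (Cconj w) n)) N.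
(* its complex derivative h'(w) = sum_{n=0}^N (-n) b_n w^{-n-1},
   written on T where w^{-1} = wbar *)
Definition tp_deriv (N : nat) (b : nat -> R) (w : C) : C :=
  Csum (fun n => Cscal (- INR n * b n) (Cpow (Cconj w) (S n))) N.

Definition F1 (Om : R) (N : nat) (b : nat -> R) (th : R) : R :=
  G1 Om (fun tau => Cadd tau (tp_eval N b tau))
        (fun tau => Cadd (CR 1) (tp_deriv N b tau)) (Cexpi th).

Fixpoint osum (n : nat) : R :=
  match n with O => 0 | S k => osum k + / (2 * INR (S k) + 1) end.
Definition Omega1 (m : nat) : R := 2 / PI * osum (m - 1).

Definition Lformula (Om : R) (N : nat) (b : nat -> R) (w : C) : C :=
  Cadd (Cscal (Om * b O / 2) (Cmul Ci (Csub w (Cconj w))))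
       (Cscal (1 / 2)
          (Csum (fun n => match n with
                  | O => CR 0
                  | S _ => Cscal (INR (S n) * (Om - Omega1 (S n)) * b n)
                             (Cmul Ci (Csub (Cpow w (S n)) (Cpow (Cconj w) (S n))))
                  end) N)).

(* f = sum_{n>=0} b_n wbar^n  in B^s  <->  b : nat -> R *)
Definition Bs_term (s : R) (b : nat -> R) (n : nat) : R :=
  match n with O => Rabs (b O) | S _ => Rpower (INR n) s * Rabs (b n) end.
(* g = i sum_{n>=1} g_n (w^n - wbar^n) in B^s_Log <-> g : nat -> R with g 0 = 0 *)
Definition BLog_term (s : R) (g : nat -> R) (n : nat) : R :=
  match n with O => 0 | S _ => Rpower (INR n) s / (1 + ln (INR n)) * Rabs (g n) end.

Definition in_Bs (s : R) (b : nat -> R) : Prop :=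
  exists l, infinite_sum (Bs_term s b) l.
Definition in_BLog (s : R) (g : nat -> R) : Prop :=
  g O = 0 /\ exists l, infinite_sum (BLog_term s g) l.

Definition series_val (u : nat -> R) : R :=
  epsilon (inhabits 0) (fun l => infinite_sum u l).
Definition Bs_norm (s : R) (b : nat -> R) : R := series_val (Bs_term s b).
Definition BLog_norm (s : R) (g : nat -> R) : R := series_val (BLog_term s g).

Definition L_coef (Om : R) (b : nat -> R) (n : nat) : R :=
  match n with
  | O => 0
  | S O => Om * b O / 2
  | S n' => INR n * (Om - Omega1 n) * b n' / 2
  end.

Definition vm (m : nat) (n : nat) : R := if Nat.eqb n (m - 1) then 1 else 0.

Definition RangeL (s : R) (m : nat) (g : nat -> R) : Prop :=
  exists b, in_Bs s b /\ forall n, L_coef (Omega1 m) b n = g n.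

Definition Cseries_to (u : nat -> C) (z : C) : Prop :=
  infinite_sum (fun n => Cre (u n)) (Cre z) /\ infinite_sum (fun n => Cim (u n)) (Cim z).

(* Main.v *)
From Stdlib Require Import ZArith Reals Lra Lia Psatz ClassicalEpsilon FunctionalExtensionality.
From Coquelicot Require Import Coquelicot.
Require Import Defs.
Open Scope R_scope.

Lemma C_ext (z u : C) : Cre z = Cre u -> Cim z = Cim u -> z = u.
Proof. destruct z, u; simpl; intros -> ->; reflexivity. Qed.

Lemma Cring : ring_theory (CR 0) (CR 1) Cadd Cmul Csub Copp (@eq C).
Proof.
  constructor; intros; apply C_ext; destruct x; try destruct y; try destruct z;
  simpl; ring.
Qed.
Add Ring Cr : Cring.

Lemma Cscal_CR r z : Cscal r z = Cmul (CR r) z.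
Proof. apply C_ext; simpl; ring. Qed.

Lemma Cexpi_add a b : Cmul (Cexpi a) (Cexpi b) = Cexpi (a + b).
Proof. apply C_ext; simpl; rewrite ?cos_plus, ?sin_plus; ring. Qed.

Lemma Cexpi_0 : Cexpi 0 = CR 1.
Proof. apply C_ext; simpl; rewrite ?cos_0, ?sin_0; ring. Qed.

Lemma Cconj_expi a : Cconj (Cexpi a) = Cexpi (- a).
Proof. apply C_ext; simpl; rewrite ?cos_neg, ?sin_neg; ring. Qed.

Lemma Cinv_expi a : Cinv (Cexpi a) = Cexpi (- a).
Proof.
  apply C_ext; simpl; rewrite ?cos_neg, ?sin_neg;
  replace (cos a * cos a + sin a * sin a) with 1 by (rewrite <- (sin2_cos2 a); unfold Rsqr; ring);
  field.
Qed.

Lemma Cpow_expi a n : Cpow (Cexpi a) n = Cexpi (INR n * a).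
Proof.
  induction n as [|n IH]; simpl Cpow.
  - rewrite Rmult_0_l, Cexpi_0; reflexivity.
  - rewrite IH, Cexpi_add, S_INR; f_equal; ring.
Qed.

Lemma Cpow_conj_expi a n : Cpow (Cconj (Cexpi a)) n = Cexpi (- (INR n * a)).
Proof. rewrite Cconj_expi, Cpow_expi; f_equal; ring. Qed.

Lemma Cnorm_expi a : Cnorm (Cexpi a) = 1.
Proof. unfold Cnorm; simpl. rewrite <- sqrt_1. f_equal.
  rewrite <- (sin2_cos2 a); unfold Rsqr; ring. Qed.

Lemma Cexpi_period_nat a k : Cexpi (a + 2 * INR k * PI) = Cexpi a.
Proof. apply C_ext; simpl; [apply cos_period | apply sin_period]. Qed.

Lemma Cexpi_period_Z a z : Cexpi (a + 2 * IZR z * PI) = Cexpi a.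
Proof.
  destruct (Z.le_gt_cases 0 z) as [H|H].
  - destruct (Z_of_nat_complete z H) as [k ->].
    rewrite <- INR_IZR_INZ. apply Cexpi_period_nat.
  - assert (H' : (0 <= - z)%Z) by lia.
    destruct (Z_of_nat_complete _ H') as [k Hk].
    replace z with (- Z.of_nat k)%Z by lia.
    rewrite opp_IZR, <- INR_IZR_INZ.
    rewrite <- (Cexpi_period_nat (a + 2 * - INR k * PI) k). f_equal; ring.
Qed.

Lemma Csum_ext f g N : (forall n, (n <= N)%nat -> f n = g n) -> Csum f N = Csum g N.
Proof.
  induction N as [|N IH]; intros H; simpl.
  - apply H; lia.
  - rewrite IH by (intros; apply H; lia). rewrite H by lia. reflexivity.
Qed.

Lemma Csum_add f g N : Csum (fun n => Cadd (f n) (g n)) N = Cadd (Csum f N) (Csum g N).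
Proof. induction N; simpl; [reflexivity|rewrite IHN; ring]. Qed.

Lemma Csum_mul_l c f N : Csum (fun n => Cmul c (f n)) N = Cmul c (Csum f N).
Proof. induction N; simpl; [reflexivity|rewrite IHN; ring]. Qed.

Lemma Csum_opp f N : Csum (fun n => Copp (f n)) N = Copp (Csum f N).
Proof. induction N; simpl; [reflexivity|rewrite IHN; ring]. Qed.

Lemma Csum_sub f g N : Csum (fun n => Csub (f n) (g n)) N = Csub (Csum f N) (Csum g N).
Proof. induction N; simpl; [reflexivity|rewrite IHN; unfold Csub; ring]. Qed.

Lemma Csum_conj f N : Csum (fun n => Cconj (f n)) N = Cconj (Csum f N).
Proof. induction N; simpl; [reflexivity|rewrite IHN; apply C_ext; simpl; ring]. Qed.

Lemma Cre_Csum f N : Cre (Csum f N) = sum_f_R0 (fun n => Cre (f n)) N.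
Proof. induction N; simpl; [reflexivity|rewrite IHN; reflexivity]. Qed.

Lemma Cim_Csum f N : Cim (Csum f N) = sum_f_R0 (fun n => Cim (f n)) N.
Proof. induction N; simpl; [reflexivity|rewrite IHN; reflexivity]. Qed.

Lemma tp_eval_scal N b t z :
  tp_eval N (fun n => t * b n) z = Cscal t (tp_eval N b z).
Proof.
  unfold tp_eval. rewrite Cscal_CR, <- Csum_mul_l. apply Csum_ext; intros.
  rewrite !Cscal_CR. apply C_ext; simpl; ring.
Qed.

Lemma tp_deriv_scal N b t z :
  tp_deriv N (fun n => t * b n) z = Cscal t (tp_deriv N b z).
Proof.
  unfold tp_deriv. rewrite Cscal_CR, <- Csum_mul_l. apply Csum_ext; intros.
  rewrite !Cscal_CR. apply C_ext; simpl; ring.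
Qed.

Lemma tp_eval_expi N b a :
  tp_eval N b (Cexpi a) = Csum (fun n => Cscal (b n) (Cexpi (- (INR n * a)))) N.
Proof. unfold tp_eval. apply Csum_ext; intros. rewrite Cpow_conj_expi; reflexivity. Qed.

Lemma tp_deriv_expi N b a :
  Cmul (Cexpi a) (tp_deriv N b (Cexpi a)) =
  Csum (fun n => Cscal (- INR n * b n) (Cexpi (- (INR n * a)))) N.
Proof.
  unfold tp_deriv. rewrite <- Csum_mul_l. apply Csum_ext; intros.
  rewrite Cpow_conj_expi, !Cscal_CR.
  transitivity (Cmul (CR (- INR n * b n)) (Cmul (Cexpi a) (Cexpi (- (INR (S n) * a))))).
  - ring.
  - rewrite Cexpi_add, S_INR. do 2 f_equal. ring.
Qed.

Definition CInt (f : R -> C) (a b : R) (v : C) : Prop :=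
  is_RInt (fun u => Cre (f u)) a b (Cre v) /\ is_RInt (fun u => Cim (f u)) a b (Cim v).

Lemma is_RInt_eq (f : R -> R) a b l l' : is_RInt f a b l -> l = l' -> is_RInt f a b l'.
Proof. intros H <-; exact H. Qed.

Lemma CInt_expi c : c <> 0 -> sin (c * PI) = 0 -> cos (c * PI) = -1 ->
  CInt (fun u => Cexpi (c * u / 2)) 0 (2 * PI) (Cmk 0 (4 / c)).
Proof.
  intros Hc Hs Hco. split; simpl.
  - set (F := fun u => 2 / c * sin (c * u / 2)).
    assert (H := is_RInt_derive F (fun u => cos (c * u / 2)) 0 (2 * PI)).
    eapply is_RInt_eq.
    + apply H; intros x _.
      * unfold F. auto_derive; [exact I|]. unfold Rdiv. field. exact Hc.
      * apply (ex_derive_continuous (V := R_NormedModule)). auto_derive. exact I.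
    + unfold F, minus, plus, opp; simpl.
      replace (c * (2 * PI) / 2) with (c * PI) by field.
      replace (c * 0 / 2) with 0 by field. rewrite Hs, sin_0. field. exact Hc.
  - set (F := fun u => - (2 / c) * cos (c * u / 2)).
    assert (H := is_RInt_derive F (fun u => sin (c * u / 2)) 0 (2 * PI)).
    eapply is_RInt_eq.
    + apply H; intros x _.
      * unfold F. auto_derive; [exact I|]. unfold Rdiv. field. exact Hc.
      * apply (ex_derive_continuous (V := R_NormedModule)). auto_derive. exact I.
    + unfold F, minus, plus, opp; simpl.
      replace (c * (2 * PI) / 2) with (c * PI) by field.
      replace (c * 0 / 2) with 0 by field. rewrite Hco, cos_0. field. exact Hc.
Qed.

Lemma is_RInt_lin (f g : R -> R) a b lf lg (p q : R) :
  is_RInt f a b lf -> is_RInt g a b lg ->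
  is_RInt (fun u => p * f u + q * g u) a b (p * lf + q * lg).
Proof.
  intros Hf Hg.
  apply (is_RInt_plus (fun u => p * f u) (fun u => q * g u)).
  - apply (is_RInt_scal f a b p lf Hf).
  - apply (is_RInt_scal g a b q lg Hg).
Qed.

Lemma is_RInt_lin2 (f g h : R -> R) a b lf lg l (p q : R) :
  is_RInt f a b lf -> is_RInt g a b lg ->
  (forall u, h u = p * f u + q * g u) -> l = p * lf + q * lg -> is_RInt h a b l.
Proof.
  intros Hf Hg Hh ->. apply is_RInt_ext with (fun u => p * f u + q * g u).
  - intros; rewrite Hh; reflexivity.
  - apply is_RInt_lin; assumption.
Qed.

Lemma is_RInt_ext' (f g : R -> R) a b l :
  (forall u, f u = g u) -> is_RInt f a b l -> is_RInt g a b l.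
Proof. intros H. apply is_RInt_ext. intros; apply H. Qed.

Lemma CInt_ext f g a b v : (forall u, f u = g u) -> CInt f a b v -> CInt g a b v.
Proof. intros H [H1 H2]; split; eapply is_RInt_ext'; eauto; intros; simpl; rewrite H; reflexivity. Qed.

Lemma CInt_eqv f a b v v' : CInt f a b v -> v = v' -> CInt f a b v'.
Proof. intros H <-; exact H. Qed.

Lemma CInt_add f g a b vf vg : CInt f a b vf -> CInt g a b vg ->
  CInt (fun u => Cadd (f u) (g u)) a b (Cadd vf vg).
Proof.
  intros [F1 F2] [G1 G2]; split; simpl.
  - apply (is_RInt_lin2 _ _ _ _ _ _ _ _ 1 1 F1 G1); intros; simpl; ring.
  - apply (is_RInt_lin2 _ _ _ _ _ _ _ _ 1 1 F2 G2); intros; simpl; ring.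
Qed.

Lemma CInt_mulc c f a b v : CInt f a b v ->
  CInt (fun u => Cmul c (f u)) a b (Cmul c v).
Proof.
  intros [F1 F2]; split; simpl.
  - apply (is_RInt_lin2 _ _ _ _ _ _ _ _ (Cre c) (- Cim c) F1 F2); intros; simpl; ring.
  - apply (is_RInt_lin2 _ _ _ _ _ _ _ _ (Cre c) (Cim c) F2 F1); intros; simpl; ring.
Qed.

Lemma CInt_scal r f a b v : CInt f a b v ->
  CInt (fun u => Cscal r (f u)) a b (Cscal r v).
Proof.
  intros H. rewrite Cscal_CR. eapply CInt_ext; [|apply (CInt_mulc (CR r)), H].
  intros; rewrite Cscal_CR; reflexivity.
Qed.

Lemma CInt_Csum (f : nat -> R -> C) (v : nat -> C) a b N :
  (forall n, CInt (f n) a b (v n)) ->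
  CInt (fun u => Csum (fun n => f n u) N) a b (Csum v N).
Proof.
  intros H; induction N; simpl; [apply H|].
  apply CInt_add; [apply IHN|apply H].
Qed.

Lemma CInt_zero a b : CInt (fun _ => CR 0) a b (CR 0).
Proof.
  split; simpl; eapply is_RInt_eq; try apply is_RInt_const;
  unfold scal; simpl; unfold mult; simpl; ring.
Qed.

Lemma sin_odd k : sin ((2 * INR k + 1) * PI) = 0.
Proof. replace ((2 * INR k + 1) * PI) with (PI + 2 * INR k * PI) by ring.
  rewrite sin_period; apply sin_PI. Qed.
Lemma cos_odd k : cos ((2 * INR k + 1) * PI) = -1.
Proof. replace ((2 * INR k + 1) * PI) with (PI + 2 * INR k * PI) by ring.
  rewrite cos_period; apply cos_PI. Qed.

Fixpoint An (n : nat) (u : R) : C :=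
  match n with O => CR 0 | S k => Cadd (An k u) (Cexpi (- (2 * INR k + 1) * u / 2)) end.
Fixpoint Bn (n : nat) (u : R) : C :=
  match n with O => CR 0 | S k => Cadd (Bn k u) (Cexpi ((2 * INR k + 3) * u / 2)) end.
Fixpoint Sp (n : nat) : R :=
  match n with O => 0 | S k => Sp k + / (2 * INR k + 1) end.

Lemma pos_odd k : 0 < 2 * INR k + 1.
Proof. pose proof (pos_INR k); lra. Qed.

Lemma CInt_An n : CInt (An n) 0 (2 * PI) (Cmk 0 (- 4 * Sp n)).
Proof.
  induction n as [|k IH]; simpl.
  - eapply CInt_eqv; [eapply CInt_ext; [|apply (CInt_zero 0 (2*PI))]; intros; reflexivity|].
    apply C_ext; simpl; ring.
  - replace (Cmk 0 (- 4 * (Sp k + / (2 * INR k + 1))))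
      with (Cadd (Cmk 0 (-4 * Sp k)) (Cmk 0 (4 / (- (2 * INR k + 1))))).
    + apply CInt_add; [exact IH|]. pose proof (pos_odd k).
      apply CInt_expi.
      * lra.
      * replace (- (2 * INR k + 1) * PI) with (- ((2 * INR k + 1) * PI)) by ring.
        rewrite sin_neg, sin_odd; ring.
      * replace (- (2 * INR k + 1) * PI) with (- ((2 * INR k + 1) * PI)) by ring.
        rewrite cos_neg, cos_odd; ring.
    + pose proof (pos_odd k). apply C_ext; simpl; field; lra.
Qed.

Lemma CInt_Bn n : CInt (Bn n) 0 (2 * PI) (Cmk 0 (4 * osum n)).
Proof.
  induction n as [|k IH]; cbn [Bn osum].
  - eapply CInt_eqv; [eapply CInt_ext; [|apply (CInt_zero 0 (2*PI))]; intros; reflexivity|].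
    apply C_ext; simpl; ring.
  - replace (Cmk 0 (4 * (osum k + / (2 * INR (S k) + 1))))
      with (Cadd (Cmk 0 (4 * osum k)) (Cmk 0 (4 / (2 * INR k + 3)))).
    + apply CInt_add; [exact IH|]. pose proof (pos_odd k).
      replace (2 * INR k + 3) with (2 * INR (S k) + 1) by (rewrite S_INR; ring).
      apply CInt_expi.
      * pose proof (pos_odd (S k)); lra.
      * apply sin_odd.
      * apply cos_odd.
    + pose proof (pos_odd k). rewrite S_INR. apply C_ext; simpl; field; lra.
Qed.

Lemma expi_m1 u : Csub (Cexpi (- u)) (CR 1) = Cmul (Cmk 0 (-2 * sin (u / 2))) (Cexpi (- u / 2)).
Proof.
  apply C_ext; simpl.
  - replace (- u) with (- (2 * (u/2))) by field. rewrite cos_neg, cos_2a_sin.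
    replace (- (2 * (u / 2)) / 2) with (- (u/2)) by field. rewrite sin_neg. ring.
  - replace (- u) with (- (2 * (u/2))) by field. rewrite sin_neg, sin_2a.
    replace (- (2 * (u / 2)) / 2) with (- (u/2)) by field. rewrite cos_neg. ring.
Qed.

Lemma An_id n u : Csub (Cexpi (- (INR n * u))) (CR 1) = Cmul (Cmk 0 (-2 * sin (u / 2))) (An n u).
Proof.
  induction n as [|k IH]; simpl An.
  - simpl INR. apply C_ext; simpl; rewrite ?Rmult_0_l, ?Ropp_0, ?cos_0, ?sin_0; ring.
  - transitivity (Cadd (Csub (Cexpi (- (INR k * u))) (CR 1))
                       (Cmul (Cexpi (- (INR k * u))) (Csub (Cexpi (- u)) (CR 1)))).
    + replace (Cexpi (- (INR (S k) * u))) with (Cmul (Cexpi (- (INR k * u))) (Cexpi (- u))).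
      * unfold Csub; ring.
      * rewrite Cexpi_add, S_INR; f_equal; ring.
    + rewrite IH, expi_m1.
      replace (Cmul (Cexpi (- (INR k * u))) (Cmul (Cmk 0 (-2 * sin (u / 2))) (Cexpi (- u / 2))))
        with (Cmul (Cmk 0 (-2 * sin (u / 2))) (Cmul (Cexpi (- (INR k * u))) (Cexpi (- u / 2)))) by ring.
      rewrite Cexpi_add. replace (- (INR k * u) + - u / 2) with (- (2 * INR k + 1) * u / 2) by field.
      ring.
Qed.

Lemma Bn_id n u : Cmul (Cexpi u) (Cconj (An n u)) = Bn n u.
Proof.
  induction n as [|k IH]; simpl An; simpl Bn.
  - apply C_ext; simpl; ring.
  - rewrite <- IH.
    replace (Cconj (Cadd (An k u) (Cexpi (- (2 * INR k + 1) * u / 2))))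
      with (Cadd (Cconj (An k u)) (Cconj (Cexpi (- (2 * INR k + 1) * u / 2))))
      by (apply C_ext; simpl; ring).
    rewrite Cconj_expi.
    replace (Cmul (Cexpi u) (Cadd (Cconj (An k u)) (Cexpi (- (- (2 * INR k + 1) * u / 2)))))
      with (Cadd (Cmul (Cexpi u) (Cconj (An k u))) (Cmul (Cexpi u) (Cexpi (- (- (2 * INR k + 1) * u / 2))))) by ring.
    rewrite Cexpi_add. do 2 f_equal. field.
Qed.

Definition xf (th u : R) : C := Cmul (Cmk 0 (-1)) (Cexpi (th + u / 2)).
Definition zf N b th u : C :=
  Cmul Ci (Csum (fun n => Cscal (b n) (Cmul (Cexpi (- (INR n * th))) (An n u))) N).
Definition yf N b th u : C :=
  Cmul Ci (Csum (fun n => Cscal (INR n * b n) (Cmul (Cexpi (- (INR n * th))) (An n u))) N).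

Lemma X_id th u : Csub (Cexpi th) (Cexpi (th + u)) = Cscal (2 * sin (u / 2)) (xf th u).
Proof.
  unfold xf. set (v := th + u / 2). set (r := u / 2).
  replace th with (v - r) by (unfold v, r; field).
  replace (v - r + u) with (v + r) by (unfold v, r; field).
  apply C_ext; simpl; rewrite ?cos_plus, ?cos_minus, ?sin_plus, ?sin_minus; ring.
Qed.

Lemma diff_term n th u :
  Csub (Cexpi (- (INR n * th))) (Cexpi (- (INR n * (th + u)))) =
  Cscal (2 * sin (u / 2)) (Cmul Ci (Cmul (Cexpi (- (INR n * th))) (An n u))).
Proof.
  replace (Cexpi (- (INR n * (th + u)))) with (Cmul (Cexpi (- (INR n * th))) (Cexpi (- (INR n * u))))
    by (rewrite Cexpi_add; f_equal; ring).
  transitivity (Cmul (Copp (Cexpi (- (INR n * th)))) (Csub (Cexpi (- (INR n * u))) (CR 1))).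
  - unfold Csub. ring.
  - rewrite An_id, Cscal_CR.
    transitivity (Cmul (Cmul (Copp (CR 1)) (Cmk 0 (-2 * sin (u / 2)))) (Cmul (Cexpi (- (INR n * th))) (An n u))).
    + ring.
    + transitivity (Cmul (Cmul (CR (2 * sin (u / 2))) Ci) (Cmul (Cexpi (- (INR n * th))) (An n u))).
      * f_equal. apply C_ext; simpl; ring.
      * ring.
Qed.

Lemma Z_id N b th u :
  Csub (tp_eval N b (Cexpi th)) (tp_eval N b (Cexpi (th + u))) = Cscal (2 * sin (u / 2)) (zf N b th u).
Proof.
  rewrite !tp_eval_expi, <- Csum_sub. unfold zf.
  rewrite Cscal_CR, <- !Csum_mul_l. apply Csum_ext; intros n _.
  transitivity (Cscal (b n) (Csub (Cexpi (- (INR n * th))) (Cexpi (- (INR n * (th + u)))))).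
  - rewrite !Cscal_CR. unfold Csub. ring.
  - rewrite diff_term, !Cscal_CR. ring.
Qed.

Lemma Y_id N b th u :
  Csub (Cmul (Cexpi (th + u)) (tp_deriv N b (Cexpi (th + u))))
       (Cmul (Cexpi th) (tp_deriv N b (Cexpi th))) = Cscal (2 * sin (u / 2)) (yf N b th u).
Proof.
  rewrite !tp_deriv_expi, <- Csum_sub. unfold yf.
  rewrite Cscal_CR, <- !Csum_mul_l. apply Csum_ext; intros n _.
  transitivity (Cscal (INR n * b n) (Csub (Cexpi (- (INR n * th))) (Cexpi (- (INR n * (th + u)))))).
  - rewrite !Cscal_CR. unfold Csub. apply C_ext; simpl; ring.
  - rewrite diff_term, !Cscal_CR. ring.
Qed.

Lemma Cnorm_scal c v : Cnorm (Cscal c v) = Rabs c * Cnorm v.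
Proof.
  unfold Cnorm; simpl.
  replace (c * Cre v * (c * Cre v) + c * Cim v * (c * Cim v))
    with (Rsqr c * (Cre v * Cre v + Cim v * Cim v)) by (unfold Rsqr; ring).
  rewrite sqrt_mult_alt by apply Rle_0_sqr. rewrite sqrt_Rsqr_abs. reflexivity.
Qed.

Definition phiT N b t tau := Cadd tau (tp_eval N (fun n => t * b n) tau).
Definition dphiT N b t tau := Cadd (CR 1) (tp_deriv N (fun n => t * b n) tau).

Definition FF N b th t a : C :=
  Cmul (Cdiv (Cscal (/ Cnorm (Csub (phiT N b t (Cexpi th)) (phiT N b t (Cexpi a))))
                    (Csub (Cmul (Cexpi a) (dphiT N b t (Cexpi a)))
                          (Cmul (Cexpi th) (dphiT N b t (Cexpi th)))))
              (Cexpi a))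
       (Cmul Ci (Cexpi a)).

Definition Hf N b th t u : C :=
  Cmul Ci (Cscal (/ Cnorm (Cadd (xf th u) (Cscal t (zf N b th u))))
                 (Cadd (Copp (xf th u)) (Cscal t (yf N b th u)))).

Lemma FF_Hf N b th t u : 0 < u < 2 * PI -> FF N b th t (th + u) = Hf N b th t u.
Proof.
  intros Hu. assert (Hs : 0 < sin (u / 2)) by (apply sin_gt_0; lra).
  unfold FF, Hf, phiT, dphiT. rewrite !tp_eval_scal, !tp_deriv_scal.
  set (w := Cexpi th). set (tau := Cexpi (th + u)).
  replace (Csub (Cadd w (Cscal t (tp_eval N b w))) (Cadd tau (Cscal t (tp_eval N b tau))))
    with (Cadd (Csub w tau) (Cscal t (Csub (tp_eval N b w) (tp_eval N b tau))))
    by (rewrite !Cscal_CR; unfold Csub; ring).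
  replace (Csub (Cmul tau (Cadd (CR 1) (Cscal t (tp_deriv N b tau))))
                (Cmul w (Cadd (CR 1) (Cscal t (tp_deriv N b w)))))
    with (Cadd (Copp (Csub w tau)) (Cscal t (Csub (Cmul tau (tp_deriv N b tau)) (Cmul w (tp_deriv N b w)))))
    by (rewrite !Cscal_CR; unfold Csub; ring).
  unfold w, tau. rewrite X_id, Z_id, Y_id.
  set (c := 2 * sin (u / 2)). set (x := xf th u). set (y := yf N b th u). set (z := zf N b th u).
  replace (Cadd (Cscal c x) (Cscal t (Cscal c z))) with (Cscal c (Cadd x (Cscal t z)))
    by (rewrite !Cscal_CR; ring).
  replace (Cadd (Copp (Cscal c x)) (Cscal t (Cscal c y))) with (Cscal c (Cadd (Copp x) (Cscal t y)))
    by (rewrite !Cscal_CR; ring).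
  rewrite Cnorm_scal, Rabs_right by (unfold c; lra).
  set (V := Cadd (Copp x) (Cscal t y)). set (nn := Cnorm (Cadd x (Cscal t z))).
  assert (E : Cscal (/ (c * nn)) (Cscal c V) = Cscal (/ nn) V).
  { rewrite Rinv_mult. assert (c <> 0) by (unfold c; intro; lra). clearbody V nn. apply C_ext; simpl;
    [replace (/ c * / nn * (c * Cre V)) with (/ nn * Cre V * (/ c * c)) by ring
    |replace (/ c * / nn * (c * Cim V)) with (/ nn * Cim V * (/ c * c)) by ring];
    rewrite Rinv_l by auto; ring. }
  rewrite E. unfold Cdiv. rewrite Cinv_expi.
  transitivity (Cmul Ci (Cmul (Cscal (/ nn) V) (Cmul (Cexpi (- (th + u))) (Cexpi (th + u))))).
  - ring.
  - rewrite Cexpi_add. replace (- (th + u) + (th + u)) with 0 by ring. rewrite Cexpi_0. ring.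
Qed.

Definition Ccont (f : R -> C) : Prop :=
  forall u, continuity_pt (fun v => Cre (f v)) u /\ continuity_pt (fun v => Cim (f v)) u.
Definition Cbnd (f : R -> C) : Prop :=
  exists K, forall u, Rabs (Cre (f u)) <= K /\ Rabs (Cim (f u)) <= K.
Definition Cnice f := Ccont f /\ Cbnd f.

Lemma nice_const c : Cnice (fun _ => c).
Proof.
  split.
  - intros u; split; apply continuity_pt_const; intros ? ?; reflexivity.
  - exists (Rabs (Cre c) + Rabs (Cim c)); intros; split;
      pose proof (Rabs_pos (Cre c)); pose proof (Rabs_pos (Cim c)); lra.
Qed.

Lemma nice_add f g : Cnice f -> Cnice g -> Cnice (fun u => Cadd (f u) (g u)).
Proof.
  intros [Cf [Kf Bf]] [Cg [Kg Bg]]; split.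
  - intros u; destruct (Cf u) as [F1 F2]; destruct (Cg u) as [G1 G2]; simpl; split.
    + exact (continuity_pt_plus _ _ _ F1 G1).
    + exact (continuity_pt_plus _ _ _ F2 G2).
  - exists (Kf + Kg); intros u; destruct (Bf u), (Bg u); simpl; split;
      eapply Rle_trans; try apply Rabs_triang; lra.
Qed.

Lemma Rabs_mul_le a b c d : Rabs a <= c -> Rabs b <= d -> Rabs (a * b) <= c * d.
Proof.
  intros H1 H2. rewrite Rabs_mult. apply Rmult_le_compat; auto using Rabs_pos.
Qed.

Lemma nice_mul f g : Cnice f -> Cnice g -> Cnice (fun u => Cmul (f u) (g u)).
Proof.
  intros [Cf [Kf Bf]] [Cg [Kg Bg]]; split.
  - intros u; destruct (Cf u) as [F1 F2]; destruct (Cg u) as [G1 G2]; simpl; split.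
    + exact (continuity_pt_minus _ _ _ (continuity_pt_mult _ _ _ F1 G1) (continuity_pt_mult _ _ _ F2 G2)).
    + exact (continuity_pt_plus _ _ _ (continuity_pt_mult _ _ _ F1 G2) (continuity_pt_mult _ _ _ F2 G1)).
  - exists (2 * (Kf * Kg)); intros u; destruct (Bf u) as [A1 A2], (Bg u) as [B1 B2]; simpl; split.
    + unfold Rminus. eapply Rle_trans; [apply Rabs_triang|]. rewrite Rabs_Ropp.
      pose proof (Rabs_mul_le _ _ _ _ A1 B1); pose proof (Rabs_mul_le _ _ _ _ A2 B2); lra.
    + eapply Rle_trans; [apply Rabs_triang|].
      pose proof (Rabs_mul_le _ _ _ _ A1 B2); pose proof (Rabs_mul_le _ _ _ _ A2 B1); lra.
Qed.

Lemma nice_scal r f : Cnice f -> Cnice (fun u => Cscal r (f u)).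
Proof.
  intros H. assert (H' := nice_mul _ _ (nice_const (CR r)) H).
  destruct H' as [C1 [K B]]; split.
  - intros u; destruct (C1 u) as [A1 A2]; split;
      [eapply continuity_pt_ext; [|exact A1]|eapply continuity_pt_ext; [|exact A2]];
      intros; rewrite Cscal_CR; reflexivity.
  - exists K; intros u; rewrite Cscal_CR; apply B.
Qed.

Lemma nice_expi g : (forall u, continuity_pt g u) -> Cnice (fun u => Cexpi (g u)).
Proof.
  intros Hg; split.
  - intros u; simpl; split.
    + apply (continuity_pt_comp g cos); [apply Hg|apply continuity_cos].
    + apply (continuity_pt_comp g sin); [apply Hg|apply continuity_sin].
  - exists 1; intros; simpl; split; apply Rabs_le; [pose proof (COS_bound (g u))|pose proof (SIN_bound (g u))]; lra.
Qed.

Lemma nice_Csum (f : nat -> R -> C) N : (forall n, Cnice (f n)) ->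
  Cnice (fun u => Csum (fun n => f n u) N).
Proof.
  intros H; induction N; simpl; [apply H|]. apply nice_add; [apply IHN|apply H].
Qed.

Lemma nice_An n : Cnice (An n).
Proof.
  induction n as [|k IH]; simpl.
  - apply nice_const.
  - apply (nice_add (An k) (fun u => Cexpi (- (2 * INR k + 1) * u / 2))); [exact IH|].
    apply nice_expi; intros; reg.
Qed.

Lemma nice_xf th : Cnice (xf th).
Proof.
  unfold xf. apply (nice_mul (fun _ => Cmk 0 (-1)) (fun u => Cexpi (th + u / 2))).
  - apply nice_const.
  - apply nice_expi; intros; reg.
Qed.

Lemma nice_zf N b th : Cnice (zf N b th).
Proof.
  unfold zf. apply (nice_mul (fun _ => Ci)); [apply nice_const|].
  apply (nice_Csum (fun n u => Cscal (b n) (Cmul (Cexpi (- (INR n * th))) (An n u)))).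
  intros n. apply nice_scal. apply (nice_mul (fun _ => Cexpi (- (INR n * th)))); [apply nice_const|apply nice_An].
Qed.

Lemma nice_yf N b th : Cnice (yf N b th).
Proof.
  unfold yf. apply (nice_mul (fun _ => Ci)); [apply nice_const|].
  apply (nice_Csum (fun n u => Cscal (INR n * b n) (Cmul (Cexpi (- (INR n * th))) (An n u)))).
  intros n. apply nice_scal. apply (nice_mul (fun _ => Cexpi (- (INR n * th)))); [apply nice_const|apply nice_An].
Qed.

Lemma xf_norm th u : Cre (xf th u) * Cre (xf th u) + Cim (xf th u) * Cim (xf th u) = 1.
Proof. unfold xf; simpl. rewrite <- (sin2_cos2 (th + u / 2)); unfold Rsqr; ring. Qed.

Lemma Rabs_mul_le' a b c d : Rabs a <= c -> Rabs b <= d -> Rabs (a * b) <= c * d.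
Proof.
  intros H1 H2. rewrite Rabs_mult. apply Rmult_le_compat; auto using Rabs_pos.
Qed.

Lemma Rabs_le_inv a b : Rabs a <= b -> - b <= a <= b.
Proof. unfold Rabs; destruct Rcase_abs; lra. Qed.

Lemma approx_core (x1 x2 z1 z2 xi yi K t : R) :
  x1*x1 + x2*x2 = 1 -> Rabs xi <= 1 -> Rabs yi <= K -> Rabs z1 <= K -> Rabs z2 <= K -> 0 <= K ->
  Rabs t <= / (8 * (K + 1)) ->
  1/4 <= (x1 + t*z1)*(x1+t*z1) + (x2+t*z2)*(x2+t*z2) /\
  Rabs (/ sqrt ((x1 + t*z1)*(x1+t*z1) + (x2+t*z2)*(x2+t*z2)) * (- xi + t*yi) - (- xi)
        - t * (yi + xi * (x1*z1 + x2*z2))) <= 120 * (K+1)^2 * t^2.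
Proof.
  intros Hx Hxi Hyi Hz1 Hz2 HK Ht.
  set (T := Rabs t).
  assert (HT0 : 0 <= T) by apply Rabs_pos.
  assert (HKT : K * T <= / 8).
  { apply Rle_trans with (K * / (8 * (K + 1))).
    - apply Rmult_le_compat_l; auto.
    - apply Rmult_le_reg_r with (8 * (K + 1)); [lra|].
      rewrite Rmult_assoc, Rinv_l by lra. lra. }
  assert (Hx1 : Rabs x1 <= 1) by (apply Rabs_le; nra).
  assert (Hx2 : Rabs x2 <= 1) by (apply Rabs_le; nra).
  set (rho := x1*z1 + x2*z2).
  assert (Hrho : Rabs rho <= 2 * K).
  { unfold rho. eapply Rle_trans; [apply Rabs_triang|].
    pose proof (Rabs_mul_le' _ _ _ _ Hx1 Hz1) as A; pose proof (Rabs_mul_le' _ _ _ _ Hx2 Hz2) as B. lra. }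
  set (zz := z1*z1 + z2*z2).
  assert (Hzz : 0 <= zz <= 2 * K * K).
  { unfold zz. apply Rabs_le_inv in Hz1; apply Rabs_le_inv in Hz2. split; nra. }
  set (v := 2 * t * rho + t * t * zz).
  assert (HQ : (x1 + t*z1)*(x1+t*z1) + (x2+t*z2)*(x2+t*z2) = 1 + v).
  { unfold v, rho, zz. nra. }
  assert (Htt : t * t = T * T) by (unfold T; rewrite <- Rabs_mult, Rabs_right; [reflexivity|nra]).
  assert (Hv : Rabs v <= 5 * K * T).
  { unfold v. eapply Rle_trans; [apply Rabs_triang|].
    rewrite !Rabs_mult. rewrite (Rabs_right 2) by lra. rewrite (Rabs_right zz) by lra.
    fold T.
    assert (T * Rabs rho <= T * (2 * K)) by (apply Rmult_le_compat_l; auto).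
    assert (T * T * zz <= T * T * (2 * K * K)) by (apply Rmult_le_compat_l; nra).
    assert (K*T*(K*T) <= K*T * /8) by (apply Rmult_le_compat_l; nra).
    nra. }
  assert (Hv' : Rabs v <= 5 / 8) by nra.
  apply Rabs_le_inv in Hv' as [Hva Hvb].
  split; [rewrite HQ; lra|].
  rewrite HQ. set (S := sqrt (1 + v)).
  assert (HS2 : S * S = 1 + v) by (unfold S; apply sqrt_sqrt; lra).
  assert (HS0 : 0 <= S) by (unfold S; apply sqrt_pos).
  assert (HSlo : 1/2 <= S) by nra.
  assert (HShi : S <= 2) by nra.
  set (beta := / S - 1).
  assert (Hbeta : beta * S * (1 + S) = - v).
  { unfold beta. field_simplify; [nra|lra]. }
  assert (Hb : Rabs beta <= 2 * Rabs v).
  { destruct (Rle_dec 0 beta).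
    - rewrite Rabs_right by lra. rewrite Rabs_left1 by nra. nra.
    - rewrite Rabs_left by lra. destruct (Rle_dec 0 v).
      + rewrite Rabs_right by lra. nra.
      + nra. }
  set (gam := / S - 1 + v / 2).
  assert (Hgam : gam * (2 * S) = (S - 1) * (S - 1) * (S + 2)).
  { unfold gam. field_simplify; [nra|lra]. }
  assert (HS1 : (S - 1) * (S - 1) * (1 + S) * (1 + S) = v * v) by nra.
  assert (Hg : Rabs gam <= 4 * (v * v)).
  { assert (0 <= (S - 1) * (S - 1)) by nra.
    assert ((S - 1) * (S - 1) <= v * v) by nra.
    apply Rabs_le. split; nra. }
  set (alpha := gam - t * t * zz / 2).
  assert (Halpha : / S - 1 + t * rho = alpha) by (unfold alpha, gam, v; field; lra).
  replace (/ S * (- xi + t * yi) - - xi - t * (yi + xi * rho))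
    with (- xi * (/ S - 1 + t * rho) + t * yi * beta) by (unfold beta; ring).
  rewrite Halpha.
  eapply Rle_trans; [apply Rabs_triang|].
  rewrite Rabs_mult, Rabs_Ropp, Rabs_mult, Rabs_mult. fold T.
  assert (Ha : Rabs alpha <= 101 * (K * K) * (T * T)).
  { unfold alpha. unfold Rminus. eapply Rle_trans; [apply Rabs_triang|].
    rewrite Rabs_Ropp. rewrite Htt.
    assert (Rabs v * Rabs v <= 25 * (K * K) * (T * T)).
    { assert (0 <= Rabs v) by apply Rabs_pos. nra. }
    rewrite (Rabs_right (T * T * zz / 2)) by (apply Rle_ge; unfold Rdiv; apply Rmult_le_pos; [nra|lra]).
    assert (v * v = Rabs v * Rabs v) by (rewrite <- Rabs_mult, Rabs_right; nra).
    assert (T * T * zz <= T * T * (2 * K * K)) by (apply Rmult_le_compat_l; nra).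
    lra. }
  assert (Hx' : Rabs xi * Rabs alpha <= 101 * (K * K) * (T * T)).
  { assert (0 <= Rabs alpha) by apply Rabs_pos. assert (0 <= Rabs xi) by apply Rabs_pos. nra. }
  assert (Hy' : T * Rabs yi * Rabs beta <= 10 * (K * K) * (T * T)).
  { assert (0 <= Rabs beta) by apply Rabs_pos. assert (0 <= Rabs yi) by apply Rabs_pos.
    assert (Rabs beta <= 10 * K * T) by lra.
    assert (T * Rabs yi <= T * K) by (apply Rmult_le_compat_l; auto).
    nra. }
  rewrite <- Htt in *. simpl. nra.
Qed.

Lemma deriv_int (F : R -> R -> R) (A : R -> R) (g0 g1 : R -> R) a b I0 I1 t0 M :
  a <= b -> 0 < t0 ->
  (forall t, Rabs t < t0 -> is_RInt (F t) a b (A t)) ->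
  is_RInt g0 a b I0 -> is_RInt g1 a b I1 ->
  (forall t u, Rabs t < t0 -> a <= u <= b -> Rabs (F t u - g0 u - t * g1 u) <= M * (t * t)) ->
  A 0 = I0 /\ derivable_pt_lim A 0 I1.
Proof.
  intros Hab Ht0 HF Hg0 Hg1 Hb.
  assert (key : forall t, Rabs t < t0 -> Rabs (A t - I0 - t * I1) <= (b - a) * (M * (t * t))).
  { intros t Ht.
    assert (H : is_RInt (fun u => F t u - g0 u - t * g1 u) a b (A t - I0 - t * I1)).
    { apply (is_RInt_lin2 (fun u => F t u - g0 u) g1 _ a b (A t - I0) I1 _ 1 (-t)).
      - apply (is_RInt_lin2 (F t) g0 _ a b (A t) I0 _ 1 (-1)); auto; intros; ring.
      - exact Hg1.
      - intros; ring.
      - ring. }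
    rewrite <- (is_RInt_unique _ _ _ _ H).
    apply abs_RInt_le_const; [exact Hab| eexists; exact H|].
    intros u Hu; apply Hb; auto. }
  assert (HM : 0 <= M).
  { assert (H := Hb (t0/2) a). rewrite Rabs_right in H by lra.
    specialize (H ltac:(lra) ltac:(lra)). pose proof (Rabs_pos (F (t0 / 2) a - g0 a - t0 / 2 * g1 a)).
    assert (0 < t0/2*(t0/2)) by nra.
    destruct (Rle_dec 0 M); auto. assert (M * (t0 / 2 * (t0 / 2)) < 0) by (apply Rmult_neg_pos; lra). lra. }
  assert (A0 : A 0 = I0).
  { assert (H := key 0). rewrite Rabs_R0 in H. specialize (H Ht0).
    rewrite !Rmult_0_l, !Rmult_0_r in H.
    apply Rabs_le_inv in H. lra. }
  split; [exact A0|].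
  intros eps Heps.
  set (c := (b - a) * M + 1).
  assert (Hc : 0 < c) by (unfold c; nra).
  assert (Hd : 0 < Rmin t0 (eps / c)) by (apply Rmin_glb_lt; [lra|unfold Rdiv; apply Rmult_lt_0_compat; [lra|apply Rinv_0_lt_compat; lra]]).
  exists (mkposreal _ Hd). intros h Hh Hhd. simpl in Hhd.
  assert (Hh1 : Rabs h < t0) by (eapply Rlt_le_trans; [exact Hhd|apply Rmin_l]).
  assert (Hh2 : Rabs h < eps / c) by (eapply Rlt_le_trans; [exact Hhd|apply Rmin_r]).
  specialize (key h Hh1).
  rewrite Rplus_0_l, A0.
  replace ((A h - I0) / h - I1) with ((A h - I0 - h * I1) / h) by (field; exact Hh).
  unfold Rdiv. rewrite Rabs_mult, Rabs_Rinv by exact Hh.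
  assert (Hpos : 0 < Rabs h) by (apply Rabs_pos_lt; exact Hh).
  apply Rmult_lt_reg_r with (Rabs h); [exact Hpos|].
  rewrite Rmult_assoc, Rinv_l by lra. rewrite Rmult_1_r.
  assert (Rabs h * Rabs h = h * h) by (rewrite <- Rabs_mult, Rabs_right; [reflexivity|nra]).
  assert (Rabs h * c < eps) by (apply (Rmult_lt_reg_r (/ c)); [apply Rinv_0_lt_compat; lra|];
     rewrite Rmult_assoc, Rinv_r, Rmult_1_r by lra; exact Hh2).
  unfold c in *. nra.
Qed.

Lemma DRInt_is (f : R -> R) a b v : is_RInt f a b v -> Defs.RInt f a b = v.
Proof.
  intros H.
  assert (pr : Riemann_integrable f a b) by (apply ex_RInt_Reals_0; exists v; exact H).
  assert (E : RiemannInt pr = v).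
  { rewrite <- (RInt_Reals f a b pr). apply is_RInt_unique; exact H. }
  unfold Defs.RInt.
  destruct (epsilon_spec (inhabits 0) (fun l => exists pr : Riemann_integrable f a b, RiemannInt pr = l))
    as [pr' E'].
  - exists v, pr; exact E.
  - rewrite <- E', <- E. apply RiemannInt_P5.
Qed.

Lemma is_RInt_shift (h : R -> R) c d v l :
  is_RInt h (c + v) (d + v) l -> is_RInt (fun y => h (y + v)) c d l.
Proof.
  intros H.
  assert (H' := is_RInt_comp_lin h 1 v c d l).
  rewrite !Rmult_1_l in H'. specialize (H' H).
  apply is_RInt_ext with (2 := H'). intros x _. unfold scal; simpl; unfold mult; simpl.
  rewrite !Rmult_1_l; reflexivity.
Qed.

Lemma per_int (f : R -> R) :
  (forall a, f (a + 2 * PI) = f a) -> forall z a, f (a + 2 * IZR z * PI) = f a.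
Proof.
  intros Hf.
  assert (Hn : forall k a, f (a + 2 * INR k * PI) = f a).
  { induction k as [|k IH]; intros a.
    - simpl. rewrite Rmult_0_r, Rmult_0_l, Rplus_0_r. reflexivity.
    - rewrite S_INR. replace (a + 2 * (INR k + 1) * PI) with ((a + 2 * INR k * PI) + 2 * PI) by ring.
      rewrite Hf, IH. reflexivity. }
  intros z a.
  destruct (Z.le_gt_cases 0 z) as [H|H].
  - destruct (Z_of_nat_complete z H) as [k ->].
    rewrite <- INR_IZR_INZ. apply Hn.
  - assert (H' : (0 <= - z)%Z) by lia.
    destruct (Z_of_nat_complete _ H') as [k Hk].
    replace z with (- Z.of_nat k)%Z by lia.
    rewrite opp_IZR, <- INR_IZR_INZ.
    rewrite <- (Hn k (a + 2 * - INR k * PI)). f_equal; ring.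
Qed.

Lemma per_shift0 (f : R -> R) th L :
  (forall a, f (a + 2 * PI) = f a) -> 0 <= th <= 2 * PI ->
  is_RInt (fun u => f (th + u)) 0 (2 * PI) L -> is_RInt f 0 (2 * PI) L.
Proof.
  intros Hf Hth H0.
  assert (H1 : is_RInt f th (th + 2 * PI) L).
  { apply is_RInt_ext with (fun y => f (th + (y + - th))).
    - intros; f_equal; ring.
    - apply (is_RInt_shift (fun u => f (th + u))).
      replace (th + - th) with 0 by ring. replace (th + 2 * PI + - th) with (2 * PI) by ring.
      exact H0. }
  assert (PIpos := PI_RGT_0).
  assert (E1 : ex_RInt f th (2 * PI)) by (apply (ex_RInt_Chasles_1 (V := R_CompleteNormedModule)) with (th + 2 * PI); [lra|exists L; exact H1]).
  assert (E2 : ex_RInt f (2 * PI) (th + 2 * PI)) by (apply (ex_RInt_Chasles_2 (V := R_CompleteNormedModule)) with th; [lra|exists L; exact H1]).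
  destruct E1 as [l2 H2]. destruct E2 as [l1 H3].
  assert (H4 : is_RInt f 0 th l1).
  { apply is_RInt_ext with (fun y => f (y + 2 * PI)).
    - intros; apply Hf.
    - apply is_RInt_shift. rewrite Rplus_0_l. exact H3. }
  assert (H5 := is_RInt_Chasles f 0 th (2 * PI) l1 l2 H4 H2).
  assert (H6 := is_RInt_Chasles f th (2 * PI) (th + 2 * PI) l2 l1 H2 H3).
  assert (E : plus l2 l1 = L).
  { rewrite <- (is_RInt_unique _ _ _ _ H6). apply is_RInt_unique; exact H1. }
  eapply is_RInt_eq; [exact H5|]. rewrite <- E. unfold plus; simpl. ring.
Qed.

Lemma per_shift (f : R -> R) th L :
  (forall a, f (a + 2 * PI) = f a) ->
  is_RInt (fun u => f (th + u)) 0 (2 * PI) L -> is_RInt f 0 (2 * PI) L.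
Proof.
  intros Hf H.
  assert (PIpos := PI_RGT_0).
  set (z := Int_part (th / (2 * PI))).
  set (th0 := th + 2 * IZR (- z) * PI).
  assert (Hz := base_Int_part (th / (2 * PI))). fold z in Hz.
  assert (Hth0 : 0 <= th0 <= 2 * PI).
  { unfold th0. rewrite opp_IZR.
    assert (A : IZR z * (2 * PI) <= th) by (apply (Rmult_le_reg_r (/ (2 * PI))); [apply Rinv_0_lt_compat; lra|];
      rewrite Rmult_assoc, Rinv_r, Rmult_1_r by lra; lra).
    assert (B : th < (IZR z + 1) * (2 * PI)) by (apply (Rmult_lt_reg_r (/ (2 * PI))); [apply Rinv_0_lt_compat; lra|];
      rewrite Rmult_assoc, Rinv_r, Rmult_1_r by lra; lra).
    lra. }
  apply (per_shift0 f th0 L Hf Hth0).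
  apply is_RInt_ext with (2 := H). intros u _.
  unfold th0. replace (th + 2 * IZR (- z) * PI + u) with ((th + u) + 2 * IZR (- z) * PI) by ring.
  symmetry; apply (per_int f Hf).
Qed.

Definition G0f th u : C := Cmul Ci (Copp (xf th u)).
Definition G1f N b th u : C :=
  Cmul Ci (Cadd (yf N b th u) (Cmul (xf th u) (CR (Cre (Cmul (Cconj (xf th u)) (zf N b th u)))))).

Lemma CInt_G0 th : CInt (G0f th) 0 (2 * PI) (Cmul (Copp (Cexpi th)) (Cmk 0 4)).
Proof.
  apply (CInt_ext (fun u => Cmul (Copp (Cexpi th)) (Cexpi (1 * u / 2)))); [|apply CInt_mulc].
  - intros u. unfold G0f, xf.
    replace (Cexpi (th + u / 2)) with (Cmul (Cexpi th) (Cexpi (1 * u / 2)))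
      by (rewrite Cexpi_add; f_equal; field).
    symmetry; apply C_ext; simpl; ring.
  - eapply CInt_eqv; [apply CInt_expi|].
    + lra.
    + rewrite Rmult_1_l; apply sin_PI.
    + rewrite Rmult_1_l; apply cos_PI.
    + apply C_ext; simpl; field.
Qed.

Definition G1sum N b th u : C :=
  Copp (Csum (fun n => Cscal (b n)
     (Cadd (Cscal (INR n + / 2) (Cmul (Cexpi (- (INR n * th))) (An n u)))
           (Cscal (/ 2) (Cmul (Cexpi ((INR n + 2) * th)) (Bn n u))))) N).

Lemma xRe (x z : C) : Cre x * Cre x + Cim x * Cim x = 1 ->
  Cmul x (CR (Cre (Cmul (Cconj x) z))) = Cscal (/ 2) (Cadd z (Cmul (Cmul x x) (Cconj z))).
Proof.
  destruct x as [x1 x2], z as [z1 z2]; simpl; intros H.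
  apply C_ext; simpl.
  - assert (E : x1 * (x1 * z1 - - x2 * z2) - 0 * 0 -
       / 2 * (z1 + ((x1 * x1 - x2 * x2) * z1 - (x1 * x2 + x2 * x1) * - z2))
       = / 2 * z1 * (x1 * x1 + x2 * x2 - 1)) by field.
    rewrite H in E. lra.
  - assert (E : x1 * 0 + x2 * (x1 * z1 - - x2 * z2) -
       / 2 * (z2 + ((x1 * x1 - x2 * x2) * - z2 + (x1 * x2 + x2 * x1) * z1))
       = / 2 * z2 * (x1 * x1 + x2 * x2 - 1)) by field.
    rewrite H in E. lra.
Qed.

Lemma Csum_comb3 (fy fz fB : nat -> C) N (a b c : C) :
  Cadd (Cmul a (Csum fy N)) (Cadd (Cmul b (Csum fz N)) (Cmul c (Csum fB N))) =
  Csum (fun n => Cadd (Cmul a (fy n)) (Cadd (Cmul b (fz n)) (Cmul c (fB n)))) N.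
Proof. induction N; simpl; [reflexivity|rewrite <- IHN; ring]. Qed.

Lemma G1f_sum N b th u : G1f N b th u = G1sum N b th u.
Proof.
  unfold G1f. rewrite xRe by apply xf_norm.
  assert (Exx : Cmul (xf th u) (xf th u) = Copp (Cmul (Cexpi (2 * th)) (Cexpi u))).
  { unfold xf. rewrite Cexpi_add.
    transitivity (Cmul (Cmul (Cmk 0 (-1)) (Cmk 0 (-1))) (Cmul (Cexpi (th + u / 2)) (Cexpi (th + u / 2)))).
    - ring.
    - rewrite Cexpi_add. replace (th + u / 2 + (th + u / 2)) with (2 * th + u) by field.
      replace (Cmul (Cmk 0 (-1)) (Cmk 0 (-1))) with (Copp (CR 1)) by (apply C_ext; simpl; ring). ring. }
  rewrite Exx.
  unfold zf, yf, G1sum.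
  set (SA := fun (c : nat -> R) => Csum (fun n => Cscal (c n) (Cmul (Cexpi (- (INR n * th))) (An n u))) N).
  assert (Ec : Cconj (Cmul Ci (Csum (fun n => Cscal (b n) (Cmul (Cexpi (- (INR n * th))) (An n u))) N))
     = Cmul (Copp Ci) (Csum (fun n => Cscal (b n) (Cmul (Cexpi (INR n * th)) (Cconj (An n u)))) N)).
  { replace (Cconj (Cmul Ci (Csum (fun n => Cscal (b n) (Cmul (Cexpi (- (INR n * th))) (An n u))) N)))
      with (Cmul (Copp Ci) (Cconj (Csum (fun n => Cscal (b n) (Cmul (Cexpi (- (INR n * th))) (An n u))) N)))
      by (apply C_ext; simpl; ring).
    rewrite <- Csum_conj. f_equal. apply Csum_ext; intros n _.
    apply C_ext; simpl; rewrite ?cos_neg, ?sin_neg; ring. }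
  rewrite Ec.
  assert (EB : Cmul (Copp (Cmul (Cexpi (2 * th)) (Cexpi u)))
      (Cmul (Copp Ci) (Csum (fun n => Cscal (b n) (Cmul (Cexpi (INR n * th)) (Cconj (An n u)))) N))
    = Cmul Ci (Csum (fun n => Cscal (b n) (Cmul (Cexpi ((INR n + 2) * th)) (Bn n u))) N)).
  { rewrite <- !Csum_mul_l. apply Csum_ext; intros n _. rewrite <- Bn_id, !Cscal_CR.
    transitivity (Cmul Ci (Cmul (CR (b n)) (Cmul (Cmul (Cexpi (2 * th)) (Cexpi (INR n * th))) (Cmul (Cexpi u) (Cconj (An n u)))))).
    - ring.
    - rewrite Cexpi_add. do 4 f_equal. ring. }
  rewrite EB.
  set (Sy := Csum (fun n => Cscal (INR n * b n) (Cmul (Cexpi (- (INR n * th))) (An n u))) N).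
  set (Sz := Csum (fun n => Cscal (b n) (Cmul (Cexpi (- (INR n * th))) (An n u))) N).
  set (SB := Csum (fun n => Cscal (b n) (Cmul (Cexpi ((INR n + 2) * th)) (Bn n u))) N).
  rewrite Cscal_CR.
  transitivity (Cadd (Cmul (Cmul Ci Ci) Sy) (Cadd (Cmul (Cmul (Cmul Ci Ci) (CR (/2))) Sz)
                                                 (Cmul (Cmul (Cmul Ci Ci) (CR (/2))) SB))).
  - ring.
  - unfold Sy, Sz, SB. rewrite Csum_comb3, <- Csum_opp. apply Csum_ext; intros n _.
    rewrite !Cscal_CR.
    replace (Cmul Ci Ci) with (Copp (CR 1)) by (apply C_ext; simpl; ring).
    apply C_ext; simpl; ring.
Qed.

Definition G1val N b th : C :=
  Copp (Csum (fun n => Cscal (b n)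
     (Cadd (Cscal (INR n + / 2) (Cmul (Cexpi (- (INR n * th))) (Cmk 0 (-4 * Sp n))))
           (Cscal (/ 2) (Cmul (Cexpi ((INR n + 2) * th)) (Cmk 0 (4 * osum n)))))) N).

Lemma CInt_opp f a b v : CInt f a b v -> CInt (fun u => Copp (f u)) a b (Copp v).
Proof.
  intros H. eapply CInt_eqv; [apply (CInt_ext (fun u => Cmul (Copp (CR 1)) (f u)));
    [|apply (CInt_mulc (Copp (CR 1)) _ _ _ _ H)]|].
  - intros; ring.
  - ring.
Qed.

Lemma CInt_G1 N b th : CInt (G1f N b th) 0 (2 * PI) (G1val N b th).
Proof.
  apply (CInt_ext (G1sum N b th)); [intros; symmetry; apply G1f_sum|].
  unfold G1sum, G1val. apply CInt_opp.
  apply (CInt_Csum (fun n u => Cscal (b n)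
     (Cadd (Cscal (INR n + / 2) (Cmul (Cexpi (- (INR n * th))) (An n u)))
           (Cscal (/ 2) (Cmul (Cexpi ((INR n + 2) * th)) (Bn n u)))))).
  intros n. apply CInt_scal. apply CInt_add; apply CInt_scal; apply CInt_mulc.
  - apply CInt_An.
  - apply CInt_Bn.
Qed.

Lemma Cexpi_2PI a : Cexpi (a + 2 * PI) = Cexpi a.
Proof. rewrite <- (Cexpi_period_nat a 1). f_equal. simpl. ring. Qed.

Lemma FF_per N b th t a : FF N b th t (a + 2 * PI) = FF N b th t a.
Proof. unfold FF. rewrite Cexpi_2PI. reflexivity. Qed.

Lemma Ccont_mulc c V : Ccont V -> Ccont (fun u => Cmul c (V u)).
Proof.
  intros H u; destruct (H u) as [A1 A2]; simpl; split.
  - exact (continuity_pt_minus _ _ _ (continuity_pt_mult _ _ _ (continuity_pt_const (fun _ => Cre c) u ltac:(intros ? ?; reflexivity)) A1)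
                                    (continuity_pt_mult _ _ _ (continuity_pt_const (fun _ => Cim c) u ltac:(intros ? ?; reflexivity)) A2)).
  - exact (continuity_pt_plus _ _ _ (continuity_pt_mult _ _ _ (continuity_pt_const (fun _ => Cre c) u ltac:(intros ? ?; reflexivity)) A2)
                                    (continuity_pt_mult _ _ _ (continuity_pt_const (fun _ => Cim c) u ltac:(intros ? ?; reflexivity)) A1)).
Qed.

Lemma Ccont_scalf (r : R -> R) V : (forall u, continuity_pt r u) -> Ccont V -> Ccont (fun u => Cscal (r u) (V u)).
Proof.
  intros Hr H u; destruct (H u) as [A1 A2]; simpl; split.
  - exact (continuity_pt_mult _ _ _ (Hr u) A1).
  - exact (continuity_pt_mult _ _ _ (Hr u) A2).
Qed.

Lemma Ccont_norm W : Ccont W -> forall u, continuity_pt (fun v => Cnorm (W v)) u.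
Proof.
  intros H u; destruct (H u) as [A1 A2]. unfold Cnorm.
  apply (continuity_pt_comp (fun v => Cre (W v) * Cre (W v) + Cim (W v) * Cim (W v)) sqrt).
  - exact (continuity_pt_plus _ _ _ (continuity_pt_mult _ _ _ A1 A1) (continuity_pt_mult _ _ _ A2 A2)).
  - apply continuity_pt_sqrt. nra.
Qed.

Lemma Ccont_ext f g : (forall u, f u = g u) -> Ccont f -> Ccont g.
Proof.
  intros E H u; destruct (H u) as [A1 A2]; split;
  [eapply continuity_pt_ext; [|exact A1]|eapply continuity_pt_ext; [|exact A2]]; intros; simpl; rewrite E; reflexivity.
Qed.

Lemma nice_cont f : Cnice f -> Ccont f.
Proof. intros [H _]; exact H. Qed.

Lemma T_deriv N b th :
  let TA := fun t => Defs.RInt (fun a => Cre (FF N b th t a)) 0 (2 * PI) in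
  let TB := fun t => Defs.RInt (fun a => Cim (FF N b th t a)) 0 (2 * PI) in
  let V0 := Cmul (Copp (Cexpi th)) (Cmk 0 4) in
  let V1 := G1val N b th in
  (TA 0 = Cre V0 /\ derivable_pt_lim TA 0 (Cre V1)) /\
  (TB 0 = Cim V0 /\ derivable_pt_lim TB 0 (Cim V1)).
Proof.
  intros TA TB V0 V1.
  destruct (nice_yf N b th) as [Cy [Ky By]].
  destruct (nice_zf N b th) as [Cz [Kz Bz]].
  set (K := Rabs Ky + Rabs Kz).
  assert (HK : 0 <= K) by (unfold K; pose proof (Rabs_pos Ky); pose proof (Rabs_pos Kz); lra).
  assert (By' : forall u, Rabs (Cre (yf N b th u)) <= K /\ Rabs (Cim (yf N b th u)) <= K).
  { intros u; destruct (By u); pose proof (Rabs_pos Kz); pose proof (Rle_abs Ky); unfold K; split; lra. }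
  assert (Bz' : forall u, Rabs (Cre (zf N b th u)) <= K /\ Rabs (Cim (zf N b th u)) <= K).
  { intros u; destruct (Bz u); pose proof (Rabs_pos Ky); pose proof (Rle_abs Kz); unfold K; split; lra. }
  set (t0 := / (8 * (K + 1))).
  assert (Ht0 : 0 < t0) by (unfold t0; apply Rinv_0_lt_compat; lra).
  assert (APX : forall t u, Rabs t < t0 ->
     1/4 <= Cre (Cadd (xf th u) (Cscal t (zf N b th u))) * Cre (Cadd (xf th u) (Cscal t (zf N b th u)))
          + Cim (Cadd (xf th u) (Cscal t (zf N b th u))) * Cim (Cadd (xf th u) (Cscal t (zf N b th u))) /\
     Rabs (Cre (Hf N b th t u) - Cre (G0f th u) - t * Cre (G1f N b th u)) <= 120 * (K + 1) ^ 2 * (t * t) /\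
     Rabs (Cim (Hf N b th t u) - Cim (G0f th u) - t * Cim (G1f N b th u)) <= 120 * (K + 1) ^ 2 * (t * t)).
  { intros t u Ht.
    pose proof (xf_norm th u) as Hx.
    destruct (By' u) as [Y1 Y2]. destruct (Bz' u) as [Z1 Z2].
    assert (Hx1 : Rabs (Cre (xf th u)) <= 1) by (apply Rabs_le; nra).
    assert (Hx2 : Rabs (Cim (xf th u)) <= 1) by (apply Rabs_le; nra).
    assert (Ht' : Rabs t <= / (8 * (K + 1))) by (fold t0; lra).
    destruct (approx_core _ _ _ _ _ _ K t Hx Hx1 Y1 Z1 Z2 HK Ht') as [P1 Q1].
    destruct (approx_core _ _ _ _ _ _ K t Hx Hx2 Y2 Z1 Z2 HK Ht') as [_ Q2].
    unfold Hf, G0f, G1f, Cnorm.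
    set (x := xf th u) in *. set (y := yf N b th u) in *. set (z := zf N b th u) in *.
    clearbody x y z. destruct x as [x1 x2], y as [y1 y2], z as [z1 z2]. simpl in *.
    split; [exact P1|].
    replace (t * t) with (t ^ 2) by ring.
    split.
    - eapply Rle_trans; [|exact Q2]. right. rewrite <- Rabs_Ropp. f_equal. ring.
    - eapply Rle_trans; [|exact Q1]. right. f_equal. ring. }
  assert (CH : forall t, Rabs t < t0 -> Ccont (Hf N b th t)).
  { intros t Ht. unfold Hf. apply Ccont_mulc. apply Ccont_scalf.
    - intros u. apply continuity_pt_inv.
      + apply Ccont_norm. intros v. apply (nice_cont _ (nice_add _ _ (nice_xf th) (nice_scal t _ (conj Cz (ex_intro _ Kz Bz)))) v).
      + destruct (APX t u Ht) as [P _]. unfold Cnorm. intros E.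
        apply sqrt_eq_0 in E; [lra|nra].
    - apply (Ccont_ext (fun u => Cadd (Cscal (-1) (xf th u)) (Cscal t (yf N b th u)))).
      + intros; apply C_ext; simpl; ring.
      + apply (nice_cont _ (nice_add _ _ (nice_scal (-1) _ (nice_xf th)) (nice_scal t _ (conj Cy (ex_intro _ Ky By))))).
  }
  assert (PIpos := PI_RGT_0).
  assert (IR : forall t, Rabs t < t0 -> is_RInt (fun u => Cre (Hf N b th t u)) 0 (2 * PI) (TA t)).
  { intros t Ht.
    assert (E : ex_RInt (fun u => Cre (Hf N b th t u)) 0 (2 * PI)).
    { apply (ex_RInt_continuous (V := R_CompleteNormedModule)). intros z _.
      apply continuity_pt_filterlim. apply (CH t Ht z). }
    destruct E as [L HL].
    replace (TA t) with L; [exact HL|].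
    symmetry. unfold TA. apply DRInt_is.
    apply (per_shift (fun a => Cre (FF N b th t a)) th L).
    - intros; rewrite FF_per; reflexivity.
    - apply is_RInt_ext with (2 := HL). intros u Hu.
      rewrite Rmin_left in Hu by lra. rewrite Rmax_right in Hu by lra.
      rewrite FF_Hf by lra. reflexivity. }
  assert (IM : forall t, Rabs t < t0 -> is_RInt (fun u => Cim (Hf N b th t u)) 0 (2 * PI) (TB t)).
  { intros t Ht.
    assert (E : ex_RInt (fun u => Cim (Hf N b th t u)) 0 (2 * PI)).
    { apply (ex_RInt_continuous (V := R_CompleteNormedModule)). intros z _.
      apply continuity_pt_filterlim. apply (CH t Ht z). }
    destruct E as [L HL].
    replace (TB t) with L; [exact HL|].
    symmetry. unfold TB. apply DRInt_is.
    apply (per_shift (fun a => Cim (FF N b th t a)) th L).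
    - intros; rewrite FF_per; reflexivity.
    - apply is_RInt_ext with (2 := HL). intros u Hu.
      rewrite Rmin_left in Hu by lra. rewrite Rmax_right in Hu by lra.
      rewrite FF_Hf by lra. reflexivity. }
  destruct (CInt_G0 th) as [G0r G0i].
  destruct (CInt_G1 N b th) as [G1r G1i].
  split.
  - apply (deriv_int (fun t u => Cre (Hf N b th t u)) TA (fun u => Cre (G0f th u)) (fun u => Cre (G1f N b th u))
             0 (2 * PI) (Cre V0) (Cre V1) t0 (120 * (K + 1) ^ 2)); auto; try lra.
    intros t u Ht _. apply (APX t u Ht).
  - apply (deriv_int (fun t u => Cim (Hf N b th t u)) TB (fun u => Cim (G0f th u)) (fun u => Cim (G1f N b th u))
             0 (2 * PI) (Cim V0) (Cim V1) t0 (120 * (K + 1) ^ 2)); auto; try lra.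
    intros t u Ht _. apply (APX t u Ht).
Qed.

Lemma F1_unfold Om N b th t :
  F1 Om N (fun n => t * b n) th =
  Cim (Cmul (Csub (Cscal Om (phiT N b t (Cexpi th)))
                  (Cdiv (Cmk (Defs.RInt (fun a => Cre (FF N b th t a)) 0 (2 * PI))
                             (Defs.RInt (fun a => Cim (FF N b th t a)) 0 (2 * PI)))
                        (Cmul (CR (2 * PI)) Ci)))
            (Cdiv (Cconj (dphiT N b t (Cexpi th))) (Cexpi th))).
Proof. reflexivity. Qed.

Definition CD (f : R -> C) (d : C) : Prop :=
  derivable_pt_lim (fun t => Cre (f t)) 0 (Cre d) /\ derivable_pt_lim (fun t => Cim (f t)) 0 (Cim d).

Lemma dpl_ext (f g : R -> R) x l l' : (forall t, f t = g t) -> l = l' ->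
  derivable_pt_lim f x l -> derivable_pt_lim g x l'.
Proof.
  intros H <-. replace g with f; [auto|]. apply functional_extensionality; auto.
Qed.

Lemma CD_ext f g d d' : (forall t, f t = g t) -> d = d' -> CD f d -> CD g d'.
Proof.
  intros H <- [H1 H2]; split; [eapply dpl_ext; [| |exact H1]|eapply dpl_ext; [| |exact H2]];
    try reflexivity; intros t; cbv beta; rewrite H; reflexivity.
Qed.

Lemma CD_const c : CD (fun _ => c) (CR 0).
Proof. split; simpl; apply derivable_pt_lim_const. Qed.

Lemma CD_lin c : CD (fun t => Cscal t c) c.
Proof.
  split; simpl.
  - eapply dpl_ext; [| |apply (derivable_pt_lim_scal id (Cre c) 0 1 (derivable_pt_lim_id 0))];
      [intros; unfold mult_real_fct, id; ring|ring].
  - eapply dpl_ext; [| |apply (derivable_pt_lim_scal id (Cim c) 0 1 (derivable_pt_lim_id 0))];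
      [intros; unfold mult_real_fct, id; ring|ring].
Qed.

Lemma CD_add f g df dg : CD f df -> CD g dg -> CD (fun t => Cadd (f t) (g t)) (Cadd df dg).
Proof.
  intros [F1 F2] [G1 G2]; split; simpl.
  - exact (derivable_pt_lim_plus _ _ _ _ _ F1 G1).
  - exact (derivable_pt_lim_plus _ _ _ _ _ F2 G2).
Qed.

Lemma CD_mul f g df dg : CD f df -> CD g dg ->
  CD (fun t => Cmul (f t) (g t)) (Cadd (Cmul df (g 0)) (Cmul (f 0) dg)).
Proof.
  intros [F1 F2] [G1 G2]; split; simpl.
  - eapply dpl_ext; [| |exact (derivable_pt_lim_minus _ _ _ _ _
        (derivable_pt_lim_mult _ _ _ _ _ F1 G1) (derivable_pt_lim_mult _ _ _ _ _ F2 G2))];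
      [intros; reflexivity|cbv beta; ring].
  - eapply dpl_ext; [| |exact (derivable_pt_lim_plus _ _ _ _ _
        (derivable_pt_lim_mult _ _ _ _ _ F1 G2) (derivable_pt_lim_mult _ _ _ _ _ F2 G1))];
      [intros; reflexivity|cbv beta; ring].
Qed.

Lemma CD_conj f df : CD f df -> CD (fun t => Cconj (f t)) (Cconj df).
Proof.
  intros [F1 F2]; split; simpl; [exact F1|].
  exact (derivable_pt_lim_opp _ _ _ F2).
Qed.

Lemma CD_opp f df : CD f df -> CD (fun t => Copp (f t)) (Copp df).
Proof.
  intros [F1 F2]; split; simpl; [exact (derivable_pt_lim_opp _ _ _ F1)|exact (derivable_pt_lim_opp _ _ _ F2)].
Qed.

Lemma Sp_osum n : Sp n = osum n + 2 * INR n / (2 * INR n + 1).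
Proof.
  induction n as [|n IH].
  - simpl. field.
  - cbn [Sp osum]. rewrite IH. rewrite S_INR. pose proof (pos_INR n). field. split; lra.
Qed.

Lemma Csum_lin3c (f g h : nat -> C) N c1 c2 c3 :
  Cadd (Cmul c1 (Csum f N)) (Cadd (Cmul c2 (Csum g N)) (Cmul c3 (Cconj (Csum h N)))) =
  Csum (fun n => Cadd (Cmul c1 (f n)) (Cadd (Cmul c2 (g n)) (Cmul c3 (Cconj (h n))))) N.
Proof. rewrite <- Csum_conj. apply Csum_comb3. Qed.

Lemma kval : Cinv (Cmul (CR (2 * PI)) Ci) = Cmk 0 (- / (2 * PI)).
Proof. pose proof PI_RGT_0. apply C_ext; simpl; field; lra. Qed.

Lemma term_id Om b th n :
  let e1 := Cexpi (- th) in
  let k := Cmk 0 (- / (2 * PI)) in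
  Cim (Cadd (Cmul (Cmul (CR Om) e1) (Cscal (b n) (Cexpi (- (INR n * th)))))
        (Cadd (Cmul (Cmul k e1)
                 (Cscal (b n) (Cadd (Cscal (INR n + / 2) (Cmul (Cexpi (- (INR n * th))) (Cmk 0 (-4 * Sp n))))
                                    (Cscal (/ 2) (Cmul (Cexpi ((INR n + 2) * th)) (Cmk 0 (4 * osum n)))))))
              (Cmul (CR (Om + 2 / PI)) (Cconj (Cscal (- INR n * b n) (Cexpi (- (INR (S n) * th))))))))
  = - (INR n + 1) * (Om - Omega1 (S n)) * b n * sin ((INR n + 1) * th).
Proof.
  intros e1 k.
  set (ea := Cexpi (- (INR n * th))). set (eb := Cexpi ((INR n + 2) * th)).
  assert (E1 : Cmul e1 ea = Cexpi (- ((INR n + 1) * th))) by (unfold e1, ea; rewrite Cexpi_add; f_equal; ring).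
  assert (E2 : Cmul e1 eb = Cexpi ((INR n + 1) * th)) by (unfold e1, eb; rewrite Cexpi_add; f_equal; ring).
  assert (E3 : Cconj (Cexpi (- (INR (S n) * th))) = Cexpi ((INR n + 1) * th))
    by (rewrite Cconj_expi, S_INR; f_equal; ring).
  replace (Cconj (Cscal (- INR n * b n) (Cexpi (- (INR (S n) * th)))))
    with (Cscal (- INR n * b n) (Cconj (Cexpi (- (INR (S n) * th))))) by (apply C_ext; simpl; ring).
  rewrite E3.
  transitivity (Cim (Cadd (Cmul (CR (Om * b n)) (Cmul e1 ea))
        (Cadd (Cmul (Cmul k (CR (b n * (INR n + / 2)))) (Cmul (Cmk 0 (-4 * Sp n)) (Cmul e1 ea)))
         (Cadd (Cmul (Cmul k (CR (b n * / 2))) (Cmul (Cmk 0 (4 * osum n)) (Cmul e1 eb)))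
               (Cmul (CR ((Om + 2 / PI) * (- INR n * b n))) (Cexpi ((INR n + 1) * th))))))).
  - f_equal. rewrite !Cscal_CR.
    replace (CR (Om * b n)) with (Cmul (CR Om) (CR (b n))) by (apply C_ext; simpl; ring).
    replace (CR (b n * (INR n + / 2))) with (Cmul (CR (b n)) (CR (INR n + / 2))) by (apply C_ext; simpl; ring).
    replace (CR (b n * / 2)) with (Cmul (CR (b n)) (CR (/ 2))) by (apply C_ext; simpl; ring).
    replace (CR ((Om + 2 / PI) * (- INR n * b n))) with (Cmul (CR (Om + 2 / PI)) (CR (- INR n * b n)))
      by (apply C_ext; simpl; ring).
    ring.
  - rewrite E1, E2. unfold k. cbn [Cim Cre Cadd Cmul CR Cexpi].
    rewrite cos_neg, sin_neg. unfold Omega1. replace (S n - 1)%nat with n by lia.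
    rewrite Sp_osum. pose proof PI_RGT_0. pose proof (pos_INR n). field. split; lra.
Qed.

Definition Tn Om b th n := - (INR n + 1) * (Om - Omega1 (S n)) * b n * sin ((INR n + 1) * th).

Lemma Omega1_1 : Omega1 1 = 0.
Proof. unfold Omega1. simpl. ring. Qed.

Lemma Lre Om N b th : Cre (Lformula Om N b (Cexpi th)) = sum_f_R0 (Tn Om b th) N.
Proof.
  unfold Lformula. cbn [Cre Cadd Cscal]. rewrite Cre_Csum.
  induction N as [|N IH].
  - simpl. unfold Tn. rewrite Omega1_1. simpl. rewrite Rplus_0_l, (Rmult_1_l th). field.
  - cbn [sum_f_R0]. rewrite <- IH.
    rewrite Rmult_plus_distr_l. rewrite <- Rplus_assoc. f_equal.
    unfold Tn. rewrite !Cpow_expi, !Cpow_conj_expi. cbn [Cre Cim Cmul Cscal Csub Cadd Copp Ci Cexpi].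
    rewrite cos_neg, sin_neg. rewrite !S_INR. field.
Qed.

Lemma Lim Om N b th : Cim (Lformula Om N b (Cexpi th)) = 0.
Proof.
  unfold Lformula. cbn [Cim Cadd Cscal]. rewrite Cim_Csum.
  induction N as [|N IH].
  - simpl. ring.
  - cbn [sum_f_R0]. rewrite Rmult_plus_distr_l, <- Rplus_assoc, IH.
    rewrite !Cpow_expi, !Cpow_conj_expi. cbn [Cre Cim Cmul Cscal Csub Cadd Copp Ci Cexpi].
    rewrite cos_neg, sin_neg. simpl. ring.
Qed.

Theorem deriv_main Om N b th :
  derivable_pt_lim (fun t => F1 Om N (fun n => t * b n) th) 0 (Cre (Lformula Om N b (Cexpi th))).
Proof.
  pose proof (T_deriv N b th) as HT. cbv zeta in HT.
  destruct HT as [[TA0 TAd] [TB0 TBd]].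
  set (TA := fun t => Defs.RInt (fun a => Cre (FF N b th t a)) 0 (2 * PI)) in *.
  set (TB := fun t => Defs.RInt (fun a => Cim (FF N b th t a)) 0 (2 * PI)) in *.
  set (V0 := Cmul (Copp (Cexpi th)) (Cmk 0 4)) in *.
  set (V1 := G1val N b th) in *.
  set (w := Cexpi th). set (hw := tp_eval N b w). set (dw := tp_deriv N b w).
  set (c2 := Cmul (CR (2 * PI)) Ci).
  set (e1 := Cexpi (- th)). set (k := Cmk 0 (- / (2 * PI))).
  assert (Hk : Cinv c2 = k) by (unfold c2, k; apply kval).
  assert (Hw : Cinv w = e1) by (unfold w, e1; apply Cinv_expi).
  set (P := fun t => Csub (Cscal Om (Cadd w (Cscal t hw))) (Cdiv (Cmk (TA t) (TB t)) c2)).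
  set (Q := fun t => Cdiv (Cconj (Cadd (CR 1) (Cscal t dw))) w).
  assert (EF : forall t, Cim (Cmul (P t) (Q t)) = F1 Om N (fun n => t * b n) th).
  { intros t. rewrite F1_unfold. unfold phiT, dphiT. rewrite tp_eval_scal, tp_deriv_scal. reflexivity. }
  assert (HTmk : CD (fun t => Cmk (TA t) (TB t)) V1) by (split; [exact TAd|exact TBd]).
  assert (HP : CD P (Cadd (Cmul (CR Om) hw) (Copp (Cmul V1 k)))).
  { eapply CD_ext; [| |apply (CD_add _ _ _ _ (CD_mul _ _ _ _ (CD_const (CR Om)) (CD_add _ _ _ _ (CD_const w) (CD_lin hw)))
                        (CD_opp _ _ (CD_mul _ _ _ _ HTmk (CD_const (Cinv c2)))))].
    - intros t. unfold P, Csub, Cdiv. rewrite (Cscal_CR Om). reflexivity.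
    - rewrite Hk. apply C_ext; simpl; ring. }
  assert (HQ : CD Q (Cmul (Cconj dw) e1)).
  { eapply CD_ext; [| |apply (CD_mul _ _ _ _ (CD_conj _ _ (CD_add _ _ _ _ (CD_const (CR 1)) (CD_lin dw))) (CD_const (Cinv w)))].
    - intros t. unfold Q, Cdiv. reflexivity.
    - rewrite Hw. apply C_ext; simpl; ring. }
  destruct (CD_mul _ _ _ _ HP HQ) as [_ HD].
  eapply dpl_ext; [exact EF| |exact HD].
  assert (Q0 : Q 0 = e1).
  { unfold Q, Cdiv. rewrite Hw. apply C_ext; simpl; ring. }
  assert (P0 : P 0 = Cscal (Om + 2 / PI) w).
  { assert (TA0p : TA 0 = Cre V0) by exact TA0. assert (TB0p : TB 0 = Cim V0) by exact TB0.
    unfold P. cbv beta. rewrite TA0p, TB0p. unfold V0, c2, Cdiv.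
    pose proof PI_RGT_0. apply C_ext; simpl; field; lra. }
  rewrite Q0, P0.
  assert (Hwe : Cmul w e1 = CR 1) by (unfold w, e1; rewrite Cexpi_add, Rplus_opp_r, Cexpi_0; reflexivity).
  assert (ED : Cadd (Cmul (Cadd (Cmul (CR Om) hw) (Copp (Cmul V1 k))) e1) (Cmul (Cscal (Om + 2 / PI) w) (Cmul (Cconj dw) e1))
     = Cadd (Cmul (Cmul (CR Om) e1) hw) (Cadd (Cmul (Cmul k e1) (Copp V1)) (Cmul (CR (Om + 2 / PI)) (Cconj dw)))).
  { rewrite Cscal_CR.
    transitivity (Cadd (Cmul (Cmul (CR Om) e1) hw) (Cadd (Cmul (Cmul k e1) (Copp V1))
                   (Cmul (CR (Om + 2 / PI)) (Cmul (Cmul w e1) (Cconj dw))))).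
    - ring.
    - rewrite Hwe. ring. }
  rewrite ED. clear ED.
  unfold V1, G1val.
  set (Sg := Csum _ N).
  replace (Copp (Copp Sg)) with Sg by ring. unfold Sg.
  unfold hw, w. rewrite tp_eval_expi.
  assert (Edw : tp_deriv N b (Cexpi th) = Csum (fun n => Cscal (- INR n * b n) (Cexpi (- (INR (S n) * th)))) N)
    by (unfold tp_deriv; apply Csum_ext; intros; rewrite Cpow_conj_expi; reflexivity).
  unfold dw, w. rewrite Edw.
  rewrite Csum_lin3c, Cim_Csum, Lre.
  apply sum_eq; intros n _.
  pose proof (term_id Om b th n) as HT. cbv zeta in HT. unfold Tn. rewrite <- HT.
  reflexivity.
Qed.

Lemma PI_gt3 : 3 < PI.
Proof. pose proof PI2_3_2. lra. Qed.

Lemma ln_le_sub1 x : 0 < x -> ln x <= x - 1.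
Proof. intros H. pose proof (exp_ineq1_le (ln x)). rewrite exp_ln in H0 by exact H. lra. Qed.

Lemma ln_ge x : 0 < x -> 1 - / x <= ln x.
Proof.
  intros H. pose proof (ln_le_sub1 (/ x) (Rinv_0_lt_compat _ H)). rewrite ln_Rinv in H0 by exact H. lra.
Qed.

Lemma ln_nonneg x : 1 <= x -> 0 <= ln x.
Proof. intros H. pose proof (ln_ge x ltac:(lra)). assert (/ x <= 1).
  { rewrite <- Rinv_1. apply Rinv_le_contravar; lra. } lra. Qed.

Lemma INR_pos n : (1 <= n)%nat -> 1 <= INR n.
Proof. intros H. apply (le_INR 1) in H. simpl in H. exact H. Qed.

Lemma osum_nonneg n : 0 <= osum n.
Proof.
  induction n; cbn [osum]; [lra|].
  assert (0 < / (2 * INR (S n) + 1)) by (apply Rinv_0_lt_compat; rewrite S_INR; pose proof (pos_INR n); lra). lra.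
Qed.

Lemma osum_le_ln n : osum n <= ln (INR n + 1).
Proof.
  induction n as [|n IH].
  - simpl. rewrite Rplus_0_l, ln_1. lra.
  - cbn [osum]. rewrite S_INR.
    pose proof (pos_INR n).
    assert (A : / (2 * (INR n + 1) + 1) <= ln (INR n + 1 + 1) - ln (INR n + 1)).
    { assert (E : ln (INR n + 1 + 1) - ln (INR n + 1) = ln ((INR n + 1 + 1) / (INR n + 1))).
      { unfold Rdiv. rewrite ln_mult, ln_Rinv by (try apply Rinv_0_lt_compat; lra). ring. }
      rewrite E. eapply Rle_trans; [|apply ln_ge; apply Rdiv_lt_0_compat; lra].
      apply Rle_trans with (/ (INR n + 1 + 1)).
      - apply Rinv_le_contravar; lra.
      - right. field. lra. }
    lra.
Qed.

Lemma osum_diff_ge j d :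
  osum (j + d) - osum j >= / 2 * (ln (2 * INR (j + d) + 3) - ln (2 * INR j + 3)).
Proof.
  induction d as [|d IH].
  - rewrite Nat.add_0_r. lra.
  - replace (j + S d)%nat with (S (j + d)) by lia. cbn [osum].
    set (n := (j + d)%nat) in *. rewrite S_INR.
    pose proof (pos_INR n).
    assert (A : / 2 * (ln (2 * (INR n + 1) + 3) - ln (2 * INR n + 3)) <= / (2 * (INR n + 1) + 1)).
    { assert (E : ln (2 * (INR n + 1) + 3) - ln (2 * INR n + 3) = ln ((2 * (INR n + 1) + 3) / (2 * INR n + 3))).
      { unfold Rdiv. rewrite ln_mult, ln_Rinv by (try apply Rinv_0_lt_compat; lra). ring. }
      rewrite E. pose proof (ln_le_sub1 ((2 * (INR n + 1) + 3) / (2 * INR n + 3)) ltac:(apply Rdiv_lt_0_compat; lra)).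
      assert (E2 : (2 * (INR n + 1) + 3) / (2 * INR n + 3) - 1 = 2 * / (2 * (INR n + 1) + 1)) by (field; lra).
      lra. }
    lra.
Qed.

Lemma Omega1_S k : (1 <= k)%nat -> Omega1 (S k) = Omega1 k + 2 / PI * / (2 * INR k + 1).
Proof.
  intros Hk. unfold Omega1. replace (S k - 1)%nat with k by lia.
  destruct k as [|k]; [lia|]. replace (S k - 1)%nat with k by lia. cbn [osum]. ring.
Qed.

Lemma Omega1_nonneg m : 0 <= Omega1 m.
Proof. unfold Omega1. pose proof (osum_nonneg (m - 1)). pose proof PI_gt3.
  apply Rmult_le_pos; [apply Rlt_le, Rdiv_lt_0_compat; lra|lra]. Qed.

Lemma Omega1_lt n p : (1 <= n)%nat -> (n < p)%nat -> Omega1 n < Omega1 p.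
Proof.
  intros Hn Hp. induction Hp as [|p Hp IH].
  - rewrite Omega1_S by lia. pose proof PI_gt3. pose proof (pos_INR n).
    assert (0 < 2 / PI * / (2 * INR n + 1)).
    { apply Rmult_lt_0_compat; [apply Rdiv_lt_0_compat; lra|apply Rinv_0_lt_compat; lra]. } lra.
  - rewrite Omega1_S by lia. pose proof PI_gt3. pose proof (pos_INR p).
    assert (0 < 2 / PI * / (2 * INR p + 1)).
    { apply Rmult_lt_0_compat; [apply Rdiv_lt_0_compat; lra|apply Rinv_0_lt_compat; lra]. } lra.
Qed.

Lemma Omega1_inj n p : (1 <= n)%nat -> (1 <= p)%nat -> Omega1 n = Omega1 p -> n = p.
Proof.
  intros Hn Hp E. destruct (Nat.lt_trichotomy n p) as [H|[H|H]]; auto.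
  - pose proof (Omega1_lt n p Hn H). lra.
  - pose proof (Omega1_lt p n Hp H). lra.
Qed.

Lemma Omega1_pos m : (2 <= m)%nat -> 0 < Omega1 m.
Proof.
  intros Hm. pose proof (Omega1_lt 1 m ltac:(lia) ltac:(lia)). pose proof (Omega1_nonneg 1). lra.
Qed.

Lemma Omega1_le_ln n : (1 <= n)%nat -> Omega1 n <= ln (INR n).
Proof.
  intros Hn. unfold Omega1. pose proof (osum_le_ln (n - 1)). pose proof (osum_nonneg (n - 1)).
  pose proof PI_gt3.
  replace (INR (n - 1) + 1) with (INR n) in H by (rewrite minus_INR by lia; simpl; ring).
  assert (2 / PI <= 1) by (apply Rmult_le_reg_r with PI; [lra|]; unfold Rdiv; rewrite Rmult_assoc, Rinv_l; lra).
  nra.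
Qed.

Lemma ln_le_mono x y : 0 < x -> x <= y -> ln x <= ln y.
Proof. intros Hx H. destruct (Rle_lt_or_eq_dec _ _ H) as [H'|H'].
  - left. apply ln_increasing; auto.
  - subst; lra. Qed.

Lemma fin_min (f : nat -> R) N : (forall n, (n <= N)%nat -> 0 < f n) ->
  exists c, 0 < c /\ forall n, (n <= N)%nat -> c <= f n.
Proof.
  induction N as [|N IH]; intros H.
  - exists (f 0%nat). split; [apply H; lia|]. intros n Hn. replace n with 0%nat by lia. lra.
  - destruct IH as [c [Hc Hc']]; [intros; apply H; lia|].
    exists (Rmin c (f (S N))). split; [apply Rmin_glb_lt; auto; apply H; lia|].
    intros n Hn. destruct (Nat.eq_dec n (S N)) as [->|Hne].
    + apply Rmin_r.
    + eapply Rle_trans; [apply Rmin_l|]. apply Hc'; lia.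
Qed.

Lemma one_plus_ln_pos n : (1 <= n)%nat -> 0 < 1 + ln (INR n).
Proof. intros H. pose proof (ln_nonneg _ (INR_pos _ H)). lra. Qed.

Lemma Omega_gap m : (2 <= m)%nat -> exists c, 0 < c /\
  forall n, (1 <= n)%nat -> n <> m -> c * (1 + ln (INR n)) <= Rabs (Omega1 m - Omega1 n).
Proof.
  intros Hm.
  set (N1 := ((2 * m + 1) * (2 * m + 1))%nat).
  set (f := fun n => if ((1 <=? n)%nat && negb (n =? m)%nat)%bool
                     then Rabs (Omega1 m - Omega1 n) / (1 + ln (INR n)) else 1).
  destruct (fin_min f N1) as [c1 [Hc1 Hc1']].
  { intros n _. unfold f. destruct (1 <=? n)%nat eqn:E1; destruct (n =? m)%nat eqn:E2; simpl; try lra.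
    apply Nat.leb_le in E1. apply Nat.eqb_neq in E2.
    apply Rdiv_lt_0_compat; [|apply one_plus_ln_pos; auto].
    apply Rabs_pos_lt. intros E. apply E2. symmetry. apply Omega1_inj; try lia. lra. }
  pose proof PI_gt3 as HPI.
  exists (Rmin c1 (/ (4 * PI))). split; [apply Rmin_glb_lt; auto; apply Rinv_0_lt_compat; lra|].
  intros n Hn Hnm.
  pose proof (one_plus_ln_pos n Hn) as Hl.
  destruct (le_lt_dec n N1) as [HnN|HnN].
  - specialize (Hc1' n HnN). unfold f in Hc1'.
    replace ((1 <=? n)%nat && negb (n =? m)%nat)%bool with true in Hc1'
      by (symmetry; apply andb_true_intro; split; [apply Nat.leb_le; lia|apply Bool.negb_true_iff, Nat.eqb_neq; auto]).
    apply Rle_trans with (c1 * (1 + ln (INR n))).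
    + apply Rmult_le_compat_r; [lra|apply Rmin_l].
    + apply Rmult_le_reg_r with (/ (1 + ln (INR n))); [apply Rinv_0_lt_compat; lra|].
      rewrite Rmult_assoc, Rinv_r, Rmult_1_r by lra. exact Hc1'.
  - assert (Hnm' : (m < n)%nat).
    { unfold N1 in HnN. nia. }
    apply Rle_trans with (/ (4 * PI) * (1 + ln (INR n))).
    { apply Rmult_le_compat_r; [lra|apply Rmin_r]. }
    pose proof (Omega1_lt m n ltac:(lia) Hnm').
    rewrite Rabs_left by lra.
    unfold Omega1.
    pose proof (osum_diff_ge (m - 1) (n - m)) as A. apply Rge_le in A.
    replace (m - 1 + (n - m))%nat with (n - 1)%nat in A by lia.
    rewrite !minus_INR in A by lia. simpl INR in A.
    replace (2 * (INR n - 1) + 3) with (2 * INR n + 1) in A by ring.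
    replace (2 * (INR m - 1) + 3) with (2 * INR m + 1) in A by ring.
    assert (B : ln (2 * INR n + 1) >= 2 * ln (2 * INR m + 1)).
    { assert (E : 2 * ln (2 * INR m + 1) = ln ((2 * INR m + 1) * (2 * INR m + 1)))
          by (pose proof (pos_INR m); rewrite ln_mult by lra; ring).
      rewrite E. apply Rle_ge, ln_le_mono; [pose proof (pos_INR m); nra|].
      assert (HnN' : ((2*m+1)*(2*m+1) <= n)%nat) by (unfold N1 in HnN; lia).
      apply le_INR in HnN'. rewrite mult_INR, !plus_INR, mult_INR in HnN'.
      replace (INR 2) with 2 in HnN' by (simpl; ring). replace (INR 1) with 1 in HnN' by (simpl; ring).
      pose proof (pos_INR m); nra. }
    assert (C : 1 + ln (INR n) <= 2 * ln (2 * INR n + 1)).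
    { assert (ln (INR n) <= ln (2 * INR n + 1)) by (apply ln_le_mono; pose proof (INR_pos n Hn); lra).
      assert (1 <= ln (2 * INR n + 1)).
      { rewrite <- (ln_exp 1) at 1. apply ln_le_mono; [apply exp_pos|].
        pose proof exp_le_3; pose proof (INR_pos n Hn); lra. }
      lra. }
    pose proof (ln_nonneg (2 * INR m + 1) ltac:(pose proof (pos_INR m); lra)).
    assert (D : 0 < / (4 * PI)) by (apply Rinv_0_lt_compat; lra).
    apply Rle_trans with (/ (4 * PI) * (2 * ln (2 * INR n + 1))); [apply Rmult_le_compat_l; lra|].
    replace (/ (4 * PI) * (2 * ln (2 * INR n + 1))) with (2 / PI * (/ 4 * ln (2 * INR n + 1))) by (field; lra).
    replace (- (2 / PI * osum (m - 1) - 2 / PI * osum (n - 1))) with (2 / PI * (osum (n - 1) - osum (m - 1))) by ring.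
    apply Rmult_le_compat_l; [apply Rlt_le, Rdiv_lt_0_compat; lra|]. lra.
Qed.

Lemma Rpower_pos x y : 0 < Rpower x y.
Proof. unfold Rpower. apply exp_pos. Qed.

Lemma Rpower_one y : Rpower 1 y = 1.
Proof. unfold Rpower. rewrite ln_1, Rmult_0_r. apply exp_0. Qed.

Lemma Rpower_sub1 x s : 0 < x -> Rpower x s = Rpower x (s - 1) * x.
Proof.
  intros H. rewrite <- (Rpower_1 x H) at 3. rewrite <- Rpower_plus. f_equal. ring.
Qed.

Lemma Rpower_succ_le n s : (1 <= n)%nat -> 0 <= s ->
  Rpower (INR (S n)) s <= Rpower 2 s * Rpower (INR n) s.
Proof.
  intros Hn Hs. pose proof (INR_pos n Hn). rewrite S_INR.
  rewrite Rpower_mult_distr by lra.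
  apply Rle_Rpower_l; [exact Hs|]. lra.
Qed.

Lemma Rpower_le_succ n s : (1 <= n)%nat -> 0 <= s ->
  Rpower (INR n) s <= Rpower (INR (S n)) s.
Proof.
  intros Hn Hs. pose proof (INR_pos n Hn). rewrite S_INR.
  apply Rle_Rpower_l; [exact Hs|]. lra.
Qed.

Lemma inf_sum_unique u l1 l2 : infinite_sum u l1 -> infinite_sum u l2 -> l1 = l2.
Proof. intros H1 H2. exact (UL_sequence (sum_f_R0 u) l1 l2 H1 H2). Qed.

Lemma series_val_is u l : infinite_sum u l -> series_val u = l.
Proof.
  intros H. unfold series_val.
  apply (inf_sum_unique u); [|exact H].
  apply (epsilon_spec (inhabits 0) (fun l => infinite_sum u l)). exists l; exact H.
Qed.

Lemma inf_sum_ext u v l : (forall n, u n = v n) -> infinite_sum u l -> infinite_sum v l.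
Proof.
  intros E H. replace v with u; auto. apply functional_extensionality; auto.
Qed.

Lemma inf_sum_comp u v l : (forall n, 0 <= u n <= v n) -> infinite_sum v l ->
  exists l', infinite_sum u l' /\ l' <= l.
Proof.
  intros H Hv.
  destruct (Rseries_CV_comp u v H (exist _ l Hv)) as [l' Hl'].
  exists l'. split; [exact Hl'|].
  apply (Rle_cv_lim (Un := sum_f_R0 u) (Vn := sum_f_R0 v)); auto.
  intros n. apply sum_Rle. intros; apply H.
Qed.

Lemma inf_sum_scal u l K : infinite_sum u l -> infinite_sum (fun n => K * u n) (K * l).
Proof.
  intros H eps Heps.
  destruct (Req_dec K 0) as [->|HK].
  - exists 0%nat. intros n _. unfold Rdist.
    replace (sum_f_R0 (fun n0 => 0 * u n0) n) with 0.
    + rewrite Rmult_0_l, Rminus_0_r, Rabs_R0. lra.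
    + induction n; simpl; [ring|rewrite <- IHn; ring].
  - destruct (H (eps / Rabs K)) as [N HN].
    + apply Rdiv_lt_0_compat; [lra|apply Rabs_pos_lt; auto].
    + exists N. intros n Hn. specialize (HN n Hn). unfold Rdist in *.
      replace (sum_f_R0 (fun n0 => K * u n0) n - K * l) with (K * (sum_f_R0 u n - l)).
      * rewrite Rabs_mult. apply Rmult_lt_reg_r with (/ Rabs K); [apply Rinv_0_lt_compat, Rabs_pos_lt; auto|].
        rewrite (Rmult_comm (Rabs K)), Rmult_assoc, Rinv_r, Rmult_1_r by (apply Rabs_no_R0; auto). exact HN.
      * rewrite Rmult_minus_distr_l, scal_sum. f_equal. apply sum_eq; intros; ring.
Qed.

Lemma inf_sum_add u v l1 l2 : infinite_sum u l1 -> infinite_sum v l2 ->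
  infinite_sum (fun n => u n + v n) (l1 + l2).
Proof.
  intros H1 H2. apply (inf_sum_ext (fun n => u n + v n)); [reflexivity|].
  intros eps Heps.
  destruct (H1 (eps / 2)) as [N1 HN1]; [lra|].
  destruct (H2 (eps / 2)) as [N2 HN2]; [lra|].
  exists (max N1 N2). intros n Hn. unfold Rdist in *.
  rewrite sum_plus.
  specialize (HN1 n ltac:(lia)). specialize (HN2 n ltac:(lia)).
  replace (sum_f_R0 u n + sum_f_R0 v n - (l1 + l2)) with ((sum_f_R0 u n - l1) + (sum_f_R0 v n - l2)) by ring.
  eapply Rle_lt_trans; [apply Rabs_triang|]. lra.
Qed.

Lemma sum_shift_in v n : sum_f_R0 (fun k => match k with O => 0 | S j => v j end) (S n) = sum_f_R0 v n.
Proof.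
  induction n as [|n IH].
  - simpl. ring.
  - rewrite (tech5 _ (S n)), IH. simpl. reflexivity.
Qed.

Lemma inf_sum_shift_in v l : infinite_sum v l ->
  infinite_sum (fun k => match k with O => 0 | S j => v j end) l.
Proof.
  intros H eps Heps. destruct (H eps Heps) as [N HN]. exists (S N). intros n Hn.
  destruct n as [|n]; [lia|]. rewrite sum_shift_in. apply HN. lia.
Qed.

Lemma inf_sum_shift_out u l : infinite_sum u l -> infinite_sum (fun k => u (S k)) (l - u 0%nat).
Proof.
  intros H eps Heps. destruct (H eps Heps) as [N HN]. exists N. intros n Hn.
  specialize (HN (S n) ltac:(lia)). unfold Rdist in *.
  replace (sum_f_R0 (fun k => u (S k)) n - (l - u 0%nat)) with (sum_f_R0 u (S n) - l); auto.
  rewrite decomp_sum by lia. simpl pred. ring.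
Qed.

Lemma inf_sum_finite u M : (forall n, (M < n)%nat -> u n = 0) -> infinite_sum u (sum_f_R0 u M).
Proof.
  intros H eps Heps. exists M. intros n Hn. unfold Rdist.
  replace (sum_f_R0 u n) with (sum_f_R0 u M).
  - rewrite Rminus_diag, Rabs_R0. lra.
  - induction Hn as [|n Hn IH]; [reflexivity|]. simpl. rewrite <- IH, H by lia. ring.
Qed.

Lemma sum_single u j : (forall n, n <> j -> u n = 0) -> sum_f_R0 u j = u j.
Proof.
  intros H. destruct j as [|j]; [reflexivity|]. simpl.
  replace (sum_f_R0 u j) with 0; [ring|].
  symmetry. assert (G : forall k, (k <= j)%nat -> sum_f_R0 u k = 0).
  { induction k as [|k IH]; intros Hk.
    - simpl. apply H. lia.
    - simpl. rewrite IH by lia. rewrite H by lia. ring. }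
  apply G; lia.
Qed.

Lemma inf_sum_single u j : (forall n, n <> j -> u n = 0) -> infinite_sum u (u j).
Proof.
  intros H. rewrite <- (sum_single u j H). apply inf_sum_finite. intros; apply H; lia.
Qed.

Lemma inf_sum_ge_term u l j : (forall n, 0 <= u n) -> infinite_sum u l -> u j <= l.
Proof.
  intros Hpos H. apply Rle_trans with (sum_f_R0 u j).
  - destruct j as [|j]; simpl; [lra|]. pose proof (cond_pos_sum u j Hpos). lra.
  - apply sum_incr; auto.
Qed.

Lemma inf_sum_nonneg u l : (forall n, 0 <= u n) -> infinite_sum u l -> 0 <= l.
Proof. intros Hp H. pose proof (inf_sum_ge_term u l 0 Hp H). pose proof (Hp 0%nat). lra. Qed.

Lemma inf_sum_zero : infinite_sum (fun _ => 0) 0.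
Proof.
  pose proof (inf_sum_single (fun _ => 0) 0 ltac:(reflexivity)). exact H.
Qed.

Lemma L_coef_0 Om b : L_coef Om b 0 = 0.
Proof. reflexivity. Qed.

Lemma L_coef_S Om b n : L_coef Om b (S n) = INR (S n) * (Om - Omega1 (S n)) * b n / 2.
Proof.
  destruct n as [|n].
  - cbn. unfold Omega1. simpl. rewrite Rmult_0_r. field.
  - reflexivity.
Qed.

Lemma Bs_term_nonneg s b n : 0 <= Bs_term s b n.
Proof.
  destruct n; simpl; [apply Rabs_pos|]. apply Rmult_le_pos; [left; apply Rpower_pos|apply Rabs_pos].
Qed.

Lemma BLog_term_S s g n : BLog_term s g (S n) = Rpower (INR (S n)) s / (1 + ln (INR (S n))) * Rabs (g (S n)).
Proof. reflexivity. Qed.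

Lemma BLog_term_nonneg s g n : 0 <= BLog_term s g n.
Proof.
  destruct n; [simpl; lra|]. rewrite BLog_term_S.
  pose proof (one_plus_ln_pos (S n) ltac:(lia)).
  apply Rmult_le_pos; [|apply Rabs_pos]. apply Rlt_le, Rdiv_lt_0_compat; [apply Rpower_pos|lra].
Qed.

Lemma Rpower2_ge1 s : 0 <= s -> 1 <= Rpower 2 s.
Proof. intros H. rewrite <- (Rpower_O 2) by lra. apply Rle_Rpower; lra. Qed.

Lemma L_bound Om s : 1 <= s -> exists K, 0 <= K /\
  forall b n, BLog_term (s - 1) (L_coef Om b) (S n) <= K * Bs_term s b n.
Proof.
  intros Hs. exists ((Rabs Om + 1) * Rpower 2 s).
  pose proof (Rpower2_ge1 s ltac:(lra)) as H2.
  split; [pose proof (Rabs_pos Om); nra|].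
  intros b n. rewrite BLog_term_S, L_coef_S.
  pose proof (one_plus_ln_pos (S n) ltac:(lia)) as Hl.
  pose proof (INR_pos (S n) ltac:(lia)) as HN.
  set (N := S n) in *.
  assert (E : Rpower (INR N) (s - 1) / (1 + ln (INR N)) * Rabs (INR N * (Om - Omega1 N) * b n / 2)
            = Rpower (INR N) s * (Rabs (Om - Omega1 N) / (1 + ln (INR N))) * Rabs (b n) / 2).
  { rewrite (Rpower_sub1 (INR N) s) by lra.
    unfold Rdiv. rewrite !Rabs_mult, Rabs_right by lra. rewrite (Rabs_right (/ 2)) by lra. field. lra. }
  rewrite E. clear E.
  assert (Hr : Rabs (Om - Omega1 N) / (1 + ln (INR N)) <= Rabs Om + 1).
  { apply Rmult_le_reg_r with (1 + ln (INR N)); [lra|].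
    unfold Rdiv. rewrite Rmult_assoc, Rinv_l, Rmult_1_r by lra.
    pose proof (Omega1_le_ln N ltac:(unfold N; lia)). pose proof (Omega1_nonneg N).
    pose proof (ln_nonneg (INR N) HN). pose proof (Rabs_pos Om).
    eapply Rle_trans; [apply Rabs_triang|]. rewrite Rabs_Ropp, (Rabs_right (Omega1 N)) by lra. nra. }
  assert (Hp : 0 <= Rabs (Om - Omega1 N) / (1 + ln (INR N))).
  { apply Rmult_le_pos; [apply Rabs_pos|left; apply Rinv_0_lt_compat; lra]. }
  pose proof (Rpower_pos (INR N) s). pose proof (Rabs_pos (b n)). pose proof (Rabs_pos Om).
  destruct n as [|n'].
  - assert (E1 : Rpower (INR N) s = 1) by (unfold N; apply Rpower_one).
    cbn [Bs_term]. rewrite E1. unfold Rdiv in *.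
    assert (Rabs (Om - Omega1 N) * / (1 + ln (INR N)) * Rabs (b 0%nat) <= (Rabs Om + 1) * Rabs (b 0%nat))
      by (apply Rmult_le_compat_r; auto).
    assert (0 <= (Rabs Om + 1) * Rabs (b 0%nat)) by nra.
    apply Rle_trans with ((Rabs Om + 1) * Rabs (b 0%nat)); [lra|]. nra.
  - cbn [Bs_term]. pose proof (Rpower_succ_le (S n') s ltac:(lia) ltac:(lra)) as Hsucc.
    fold N in Hsucc.
    pose proof (Rpower_pos (INR (S n')) s).
    apply Rle_trans with (Rpower (INR N) s * (Rabs Om + 1) * Rabs (b (S n'))).
    + unfold Rdiv.
      assert (Rpower (INR N) s * (Rabs (Om - Omega1 N) * / (1 + ln (INR N))) <= Rpower (INR N) s * (Rabs Om + 1))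
        by (apply Rmult_le_compat_l; lra).
      set (X := Rpower (INR N) s * (Rabs (Om - Omega1 N) * / (1 + ln (INR N)))) in *.
      set (Y := Rpower (INR N) s * (Rabs Om + 1)) in *.
      replace (X * Rabs (b (S n')) * / 2) with (X * (Rabs (b (S n')) * / 2)) by ring.
      replace (Rpower (INR N) s * (Rabs Om + 1) * Rabs (b (S n'))) with (Y * Rabs (b (S n'))) by (unfold Y; ring).
      assert (0 <= Y) by (unfold Y; nra).
      apply Rle_trans with (Y * (Rabs (b (S n')) * / 2)); [apply (Rmult_le_compat_r (Rabs (b (S n')) * / 2)); [nra|assumption]|].
      nra.
    + assert (0 <= (Rabs Om + 1) * Rabs (b (S n'))) by nra.
      replace (Rpower (INR N) s * (Rabs Om + 1) * Rabs (b (S n'))) with (Rpower (INR N) s * ((Rabs Om + 1) * Rabs (b (S n')))) by ring.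
      replace ((Rabs Om + 1) * Rpower 2 s * (Rpower (INR (S n')) s * Rabs (b (S n'))))
        with ((Rpower 2 s * Rpower (INR (S n')) s) * ((Rabs Om + 1) * Rabs (b (S n')))) by ring.
      apply Rmult_le_compat_r; assumption.
Qed.

Lemma L_series Om s : 1 <= s -> exists K, 0 <= K /\
  forall b l, infinite_sum (Bs_term s b) l ->
    exists l', infinite_sum (BLog_term (s - 1) (L_coef Om b)) l' /\ l' <= K * l.
Proof.
  intros Hs. destruct (L_bound Om s Hs) as [K [HK HB]]. exists K. split; [exact HK|].
  intros b l Hl.
  set (v := fun n => match n with O => 0 | S k => K * Bs_term s b k end).
  assert (Hv : infinite_sum v (K * l)).
  { apply inf_sum_shift_in. apply inf_sum_scal. exact Hl. }
  apply (inf_sum_comp _ v); [|exact Hv].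
  intros n. split; [apply BLog_term_nonneg|].
  destruct n as [|n]; [simpl; lra|]. apply HB.
Qed.

Lemma Bs_sub s b c : in_Bs s b -> in_Bs s c -> exists l, infinite_sum (Bs_term s (fun n => c n - b n)) l.
Proof.
  intros [lb Hb] [lc Hc].
  destruct (inf_sum_comp (Bs_term s (fun n => c n - b n)) (fun n => Bs_term s c n + Bs_term s b n) (lc + lb))
    as [l [Hl _]].
  - intros n. split; [apply Bs_term_nonneg|].
    destruct n; simpl.
    + unfold Rminus. eapply Rle_trans; [apply Rabs_triang|]. rewrite Rabs_Ropp. lra.
    + rewrite <- Rmult_plus_distr_l. apply Rmult_le_compat_l; [left; apply Rpower_pos|].
      unfold Rminus. eapply Rle_trans; [apply Rabs_triang|]. rewrite Rabs_Ropp. lra.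
  - apply inf_sum_add; assumption.
  - exists l; exact Hl.
Qed.

Lemma BLog_sub s g h : in_BLog s g -> in_BLog s h -> exists l, infinite_sum (BLog_term s (fun n => h n - g n)) l.
Proof.
  intros [_ [lg Hg]] [_ [lh Hh]].
  destruct (inf_sum_comp (BLog_term s (fun n => h n - g n)) (fun n => BLog_term s h n + BLog_term s g n) (lh + lg))
    as [l [Hl _]].
  - intros n. split; [apply BLog_term_nonneg|].
    destruct n; [simpl; lra|]. rewrite !BLog_term_S.
    pose proof (one_plus_ln_pos (S n) ltac:(lia)).
    rewrite <- Rmult_plus_distr_l. apply Rmult_le_compat_l; [apply Rlt_le, Rdiv_lt_0_compat; [apply Rpower_pos|lra]|].
    unfold Rminus. eapply Rle_trans; [apply Rabs_triang|]. rewrite Rabs_Ropp. lra.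
  - apply inf_sum_add; assumption.
  - exists l; exact Hl.
Qed.

Lemma L_sub Om b c : (fun n => L_coef Om c n - L_coef Om b n) = L_coef Om (fun n => c n - b n).
Proof.
  apply functional_extensionality. intros n. destruct n as [|n]; [simpl; ring|].
  rewrite !L_coef_S. field.
Qed.

Lemma part1 s (hs : 1 <= s) : forall Om : R,
      (forall b, in_Bs s b -> in_BLog (s - 1) (L_coef Om b))
      /\ (forall b, in_Bs s b -> forall eps, 0 < eps ->
            exists delta, 0 < delta /\
              forall c, in_Bs s c -> Bs_norm s (fun n => c n - b n) < delta ->
                BLog_norm (s - 1) (fun n => L_coef Om c n - L_coef Om b n) < eps).
Proof.
  intros Om. destruct (L_series Om s hs) as [K [HK HL]]. split.
  - intros b [l Hl]. split; [reflexivity|].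
    destruct (HL b l Hl) as [l' [Hl' _]]. exists l'; exact Hl'.
  - intros b Hb eps Heps. exists (eps / (K + 1)). split; [apply Rdiv_lt_0_compat; lra|].
    intros c Hc Hn.
    destruct (Bs_sub s b c Hb Hc) as [ld Hld].
    unfold Bs_norm in Hn. rewrite (series_val_is _ _ Hld) in Hn.
    rewrite L_sub.
    destruct (HL _ _ Hld) as [l' [Hl' Hle]].
    unfold BLog_norm. rewrite (series_val_is _ _ Hl').
    pose proof (inf_sum_nonneg _ _ (Bs_term_nonneg s (fun n => c n - b n)) Hld).
    apply Rle_lt_trans with (K * ld); [exact Hle|].
    apply Rle_lt_trans with (K * (eps / (K + 1))).
    + apply Rmult_le_compat_l; lra.
    + apply Rmult_lt_reg_r with (K + 1); [lra|].
      unfold Rdiv. rewrite Rmult_assoc, Rmult_assoc, Rinv_l by lra. nra.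
Qed.

Lemma INR_S_neq0 n : INR (S n) <> 0.
Proof. pose proof (pos_INR n). rewrite S_INR. lra. Qed.

Lemma vm_eq m n : vm m n = if Nat.eqb n (m - 1) then 1 else 0.
Proof. reflexivity. Qed.

Lemma single_Bs s (u : nat -> R) j : (forall n, n <> j -> u n = 0) -> in_Bs s u.
Proof.
  intros H. exists (Bs_term s u j). apply inf_sum_single. intros n Hn.
  destruct n; simpl; rewrite H by auto; [apply Rabs_R0|rewrite Rabs_R0; ring].
Qed.

Lemma single_BLog s (u : nat -> R) j : u 0%nat = 0 -> (forall n, n <> j -> u n = 0) -> in_BLog s u.
Proof.
  intros H0 H. split; [exact H0|]. exists (BLog_term s u j). apply inf_sum_single. intros n Hn.
  destruct n; [reflexivity|]. rewrite BLog_term_S, H by auto. rewrite Rabs_R0; ring.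
Qed.

Lemma vm_Bs s m : in_Bs s (vm m).
Proof. apply (single_Bs s (vm m) (m - 1)). intros n Hn. unfold vm. rewrite (proj2 (Nat.eqb_neq _ _) Hn). reflexivity. Qed.

Lemma part2a s (hs : 1 <= s) : forall Om : R, Om <> 0 ->
      ((exists b, in_Bs s b /\ (exists n, b n <> 0) /\ forall n, L_coef Om b n = 0)
       <-> exists m : nat, (2 <= m)%nat /\ Om = Omega1 m).
Proof.
  intros Om HOm. split.
  - intros [b [_ [[n Hn] HL]]]. specialize (HL (S n)). rewrite L_coef_S in HL.
    assert (E : Om - Omega1 (S n) = 0).
    { pose proof (INR_S_neq0 n).
      destruct (Req_dec (Om - Omega1 (S n)) 0) as [E|E]; auto.
      exfalso. assert (INR (S n) * (Om - Omega1 (S n)) * b n <> 0) by (repeat apply Rmult_integral_contrapositive_currified; auto).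
      apply H0. lra. }
    destruct n as [|n].
    + exfalso. apply HOm. unfold Omega1 in E. simpl in E. lra.
    + exists (S (S n)). split; [lia|lra].
  - intros [m [Hm ->]]. exists (vm m). split; [apply vm_Bs|]. split.
    + exists (m - 1)%nat. unfold vm. rewrite Nat.eqb_refl. lra.
    + intros n. destruct n as [|n]; [reflexivity|]. rewrite L_coef_S. unfold vm.
      destruct (Nat.eqb n (m - 1)) eqn:E.
      * apply Nat.eqb_eq in E. replace (S n) with m by lia. field.
      * field.
Qed.

Lemma part2b s (hs : 1 <= s) : forall m : nat, (2 <= m)%nat ->
      in_Bs s (vm m)
      /\ forall b, in_Bs s b ->
           ((forall n, L_coef (Omega1 m) b n = 0) <-> exists c : R, forall n, b n = c * vm m n).
Proof.
  intros m Hm. split; [apply vm_Bs|]. intros b _. split.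
  - intros HL. exists (b (m - 1)%nat). intros n. unfold vm.
    destruct (Nat.eqb n (m - 1)) eqn:E.
    + apply Nat.eqb_eq in E. subst. ring.
    + apply Nat.eqb_neq in E. rewrite Rmult_0_r.
      specialize (HL (S n)). rewrite L_coef_S in HL.
      assert (Hne : Omega1 m - Omega1 (S n) <> 0).
      { intros H. assert (Omega1 m = Omega1 (S n)) by lra. apply Omega1_inj in H0; lia. }
      pose proof (INR_S_neq0 n).
      destruct (Req_dec (b n) 0) as [Z|Z]; auto. exfalso.
      assert (INR (S n) * (Omega1 m - Omega1 (S n)) * b n <> 0) by (repeat apply Rmult_integral_contrapositive_currified; auto).
      apply H0. lra.
  - intros [c Hc] n. destruct n as [|n]; [reflexivity|]. rewrite L_coef_S, Hc. unfold vm.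
    destruct (Nat.eqb n (m - 1)) eqn:E.
    + apply Nat.eqb_eq in E. replace (S n) with m by lia. field.
    + field.
Qed.

Lemma range_vanish s m g : (2 <= m)%nat -> RangeL s m g -> g m = 0.
Proof.
  intros Hm [b [_ Hb]]. rewrite <- Hb. destruct m as [|m']; [lia|].
  rewrite L_coef_S. field.
Qed.

Lemma range_in s (hs : 1 <= s) m g : RangeL s m g -> in_BLog (s - 1) g.
Proof.
  intros [b [Hb Hg]]. destruct (part1 s hs (Omega1 m)) as [P _].
  replace g with (L_coef (Omega1 m) b) by (apply functional_extensionality; auto).
  apply P; exact Hb.
Qed.

Definition preim (m : nat) (g : nat -> R) (n : nat) : R :=
  if Nat.eqb n (m - 1) then 0 else 2 * g (S n) / (INR (S n) * (Omega1 m - Omega1 (S n))).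

Lemma range_char s (hs : 1 <= s) m : (2 <= m)%nat ->
  forall g, RangeL s m g <-> (in_BLog (s - 1) g /\ g m = 0).
Proof.
  intros Hm g. split.
  - intros H. split; [eapply range_in; eauto|eapply range_vanish; eauto].
  - intros [[Hg0 [l Hl]] Hgm].
    destruct (Omega_gap m Hm) as [c [Hc Hgap]].
    exists (preim m g). split.
    +
      pose proof (inf_sum_shift_out _ _ Hl) as Hl'.
      assert (Hl2 : infinite_sum (fun k => 2 / c * BLog_term (s - 1) g (S k)) (2 / c * (l - BLog_term (s - 1) g 0))).
      { apply inf_sum_scal; exact Hl'. }
      assert (Hcmp : forall k, 0 <= Bs_term s (preim m g) k <= 2 / c * BLog_term (s - 1) g (S k)).
      2: { destruct (inf_sum_comp _ _ _ Hcmp Hl2) as [l' [Hl'' _]]. exists l'; exact Hl''. }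
      intros k. split; [apply Bs_term_nonneg|].
      pose proof (one_plus_ln_pos (S k) ltac:(lia)) as Hl1.
      pose proof (INR_pos (S k) ltac:(lia)) as HN.
      assert (Hpk : Rabs (preim m g k) <= 2 / c * (Rabs (g (S k)) / (1 + ln (INR (S k)))) / INR (S k)).
      { unfold preim. destruct (Nat.eqb k (m - 1)) eqn:E.
        - rewrite Rabs_R0. pose proof (Rabs_pos (g (S k))).
          apply Rmult_le_pos; [|left; apply Rinv_0_lt_compat; lra].
          apply Rmult_le_pos; [apply Rlt_le, Rdiv_lt_0_compat; lra|].
          apply Rmult_le_pos; [lra|left; apply Rinv_0_lt_compat; lra].
        - apply Nat.eqb_neq in E.
          assert (Hne : S k <> m) by lia.
          specialize (Hgap (S k) ltac:(lia) Hne).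
          assert (Hd : 0 < Rabs (Omega1 m - Omega1 (S k))) by nra.
          unfold Rdiv. rewrite !Rabs_mult, Rabs_Rinv.
          2: { apply Rmult_integral_contrapositive_currified; [lra|]. intros Z; rewrite Z, Rabs_R0 in Hd; lra. }
          rewrite Rabs_mult, (Rabs_right 2), (Rabs_right (INR (S k))) by lra.
          rewrite Rinv_mult.
          pose proof (Rabs_pos (g (S k))).
          assert (/ Rabs (Omega1 m - Omega1 (S k)) <= / (c * (1 + ln (INR (S k))))).
          { apply Rinv_le_contravar; [apply Rmult_lt_0_compat; lra|exact Hgap]. }
          rewrite Rinv_mult in H0.
          assert (0 < / INR (S k)) by (apply Rinv_0_lt_compat; lra).
          assert (0 <= 2 * Rabs (g (S k)) * / INR (S k)) by (apply Rmult_le_pos; [nra|lra]).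
          apply Rle_trans with (2 * Rabs (g (S k)) * / INR (S k) * (/ c * / (1 + ln (INR (S k))))).
          + replace (2 * Rabs (g (S k)) * (/ INR (S k) * / Rabs (Omega1 m - Omega1 (S k))))
              with (2 * Rabs (g (S k)) * / INR (S k) * / Rabs (Omega1 m - Omega1 (S k))) by ring.
            apply Rmult_le_compat_l; assumption.
          + right. field. split; lra. }
      destruct k as [|k].
      * cbn [Bs_term]. rewrite BLog_term_S.
        replace (INR 1) with 1 in * by reflexivity. rewrite Rpower_one.
        eapply Rle_trans; [exact Hpk|]. right. field. split; lra.
      * cbn [Bs_term]. rewrite BLog_term_S.
        pose proof (Rpower_le_succ (S k) s ltac:(lia) ltac:(lra)) as Hp.
        pose proof (Rpower_pos (INR (S k)) s).
        apply Rle_trans with (Rpower (INR (S (S k))) s * (2 / c * (Rabs (g (S (S k))) / (1 + ln (INR (S (S k))))) / INR (S (S k)))).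
        -- apply Rmult_le_compat; [lra|apply Rabs_pos|exact Hp|exact Hpk].
        -- right. rewrite (Rpower_sub1 (INR (S (S k))) s) by lra. field. split; lra.
    +
      intros n. destruct n as [|n]; [simpl; auto|].
      rewrite L_coef_S. unfold preim.
      destruct (Nat.eqb n (m - 1)) eqn:E.
      * apply Nat.eqb_eq in E. replace (S n) with m by lia. rewrite Hgm. field.
      * apply Nat.eqb_neq in E.
        assert (Hne : Omega1 m - Omega1 (S n) <> 0).
        { intros H. assert (Omega1 m = Omega1 (S n)) by lra. apply Omega1_inj in H0; lia. }
        pose proof (INR_S_neq0 n). field. split; auto.
Qed.

Lemma part3 s (hs : 1 <= s) : forall m : nat, (2 <= m)%nat ->
      (forall g, RangeL s m g <-> (in_BLog (s - 1) g /\ g m = 0))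
      /\ (forall g, in_BLog (s - 1) g ->
            (forall eps, 0 < eps -> exists h, RangeL s m h /\
                BLog_norm (s - 1) (fun n => h n - g n) < eps) ->
            RangeL s m g)
      /\ (exists e, in_BLog (s - 1) e /\ ~ RangeL s m e /\
            forall g, in_BLog (s - 1) g -> exists c : R, RangeL s m (fun n => g n - c * e n)).
Proof.
  intros m Hm. split; [apply range_char; auto|]. split.
  - intros g Hg Happ. apply (range_char s hs m Hm). split; [exact Hg|].
    destruct (Req_dec (g m) 0) as [Z|Hne]; [exact Z|exfalso].
    destruct m as [|m']; [lia|].
    pose proof (one_plus_ln_pos (S m') ltac:(lia)).
    set (eps := Rpower (INR (S m')) (s - 1) / (1 + ln (INR (S m'))) * Rabs (g (S m'))).
    assert (Heps : 0 < eps).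
    { unfold eps. apply Rmult_lt_0_compat; [apply Rdiv_lt_0_compat; [apply Rpower_pos|lra]|apply Rabs_pos_lt; auto]. }
    destruct (Happ eps Heps) as [h [Hh Hn]].
    pose proof (range_vanish s (S m') h Hm Hh) as Hhm.
    destruct (BLog_sub (s - 1) g h Hg (range_in s hs _ _ Hh)) as [l Hl].
    unfold BLog_norm in Hn. rewrite (series_val_is _ _ Hl) in Hn.
    pose proof (inf_sum_ge_term _ _ (S m') (BLog_term_nonneg (s - 1) _) Hl) as Hge.
    rewrite BLog_term_S, Hhm in Hge. rewrite Rminus_0_l, Rabs_Ropp in Hge. fold eps in Hge. lra.
  - set (e := fun n => if Nat.eqb n m then 1 else 0).
    assert (He : in_BLog (s - 1) e).
    { apply (single_BLog _ e m).
      - unfold e. destruct (Nat.eqb 0 m) eqn:E; [apply Nat.eqb_eq in E; lia|reflexivity].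
      - intros n Hn. unfold e. rewrite (proj2 (Nat.eqb_neq _ _) Hn). reflexivity. }
    exists e. split; [exact He|]. split.
    + intros H. pose proof (range_vanish s m e Hm H). unfold e in H0. rewrite Nat.eqb_refl in H0. lra.
    + intros g Hg. exists (g m). apply (range_char s hs m Hm). split.
      * assert (Hce : in_BLog (s - 1) (fun n => g m * e n)).
        { apply (single_BLog _ _ m).
          - unfold e. destruct (Nat.eqb 0 m) eqn:E; [apply Nat.eqb_eq in E; lia|ring].
          - intros n Hn. unfold e. rewrite (proj2 (Nat.eqb_neq _ _) Hn). ring. }
        split.
        -- destruct Hg as [Hg0 _]. destruct Hce as [Hc0 _]. simpl in Hc0. rewrite Hg0, Hc0. ring.
        -- destruct (BLog_sub (s - 1) _ _ Hce Hg) as [l Hl]. exists l. exact Hl.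
      * unfold e. rewrite Nat.eqb_refl. ring.
Qed.

Lemma Csum_last f N : (forall n, (n < N)%nat -> f n = CR 0) -> Csum f N = f N.
Proof.
  intros H. destruct N as [|N]; [reflexivity|]. simpl.
  assert (G : forall k, (k <= N)%nat -> Csum f k = CR 0).
  { induction k as [|k IH]; intros Hk; simpl.
    - apply H; lia.
    - rewrite IH, H by lia. apply C_ext; simpl; ring. }
  rewrite G by lia. apply C_ext; simpl; ring.
Qed.

Lemma part4 s (hs : 1 <= s) : forall m : nat, (2 <= m)%nat ->
      exists D : nat -> R,
        in_BLog (s - 1) D
        /\ (forall eps, 0 < eps -> exists delta, 0 < delta /\
              forall Om, Om <> Omega1 m -> Rabs (Om - Omega1 m) < delta ->
                BLog_norm (s - 1)
                  (fun n => (L_coef Om (vm m) n - L_coef (Omega1 m) (vm m) n) / (Om - Omega1 m)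
                            - D n) < eps)
        /\ (forall th : R,
              let w := Cexpi th in
              Cseries_to (fun n => Cscal (D n) (Cmul Ci (Csub (Cpow w n) (Cpow (Cconj w) n))))
                (CR (Cim (Cadd (Cconj (tp_deriv (m - 1) (vm m) w))
                               (Cmul (Cconj w) (tp_eval (m - 1) (vm m) w))))))
        /\ ~ RangeL s m D.
Proof.
  intros m Hm.
  set (D := fun n => if Nat.eqb n m then INR m / 2 else 0).
  assert (HD0 : forall n, n <> m -> D n = 0) by (intros n Hn; unfold D; rewrite (proj2 (Nat.eqb_neq _ _) Hn); reflexivity).
  assert (HDm : D m = INR m / 2) by (unfold D; rewrite Nat.eqb_refl; reflexivity).
  exists D. split; [|split; [|split]].
  - apply (single_BLog _ D m); [apply HD0; lia|exact HD0].
  - intros eps Heps. exists 1. split; [lra|]. intros Om HOm _.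
    assert (Z : (fun n => (L_coef Om (vm m) n - L_coef (Omega1 m) (vm m) n) / (Om - Omega1 m) - D n) = (fun _ => 0)).
    { apply functional_extensionality. intros n.
      assert (Hx : Om - Omega1 m <> 0) by (intro; apply HOm; lra).
      destruct n as [|k].
      - rewrite !L_coef_0, HD0 by lia. field. exact Hx.
      - rewrite !L_coef_S. unfold vm.
        destruct (Nat.eqb k (m - 1)) eqn:E.
        + apply Nat.eqb_eq in E. replace (S k) with m by lia. rewrite HDm. field. exact Hx.
        + apply Nat.eqb_neq in E. rewrite HD0 by lia. field. exact Hx. }
    rewrite Z. unfold BLog_norm.
    replace (BLog_term (s - 1) (fun _ => 0)) with (fun _ : nat => 0).
    + rewrite (series_val_is _ _ inf_sum_zero). exact Heps.
    + apply functional_extensionality. intros n. destruct n; [reflexivity|]. rewrite BLog_term_S, Rabs_R0. ring.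
  - intros th w. unfold w.
    assert (Ed : tp_deriv (m - 1) (vm m) (Cexpi th) = Cscal (- INR (m - 1) * 1) (Cexpi (- (INR m * th)))).
    { unfold tp_deriv. rewrite Csum_last.
      - unfold vm. rewrite Nat.eqb_refl. rewrite Cpow_conj_expi. replace (S (m - 1)) with m by lia. reflexivity.
      - intros n Hn. unfold vm. rewrite (proj2 (Nat.eqb_neq n (m - 1))) by lia. apply C_ext; simpl; ring. }
    assert (Ee : tp_eval (m - 1) (vm m) (Cexpi th) = Cscal 1 (Cexpi (- (INR (m - 1) * th)))).
    { unfold tp_eval. rewrite Csum_last.
      - unfold vm. rewrite Nat.eqb_refl. rewrite Cpow_conj_expi. reflexivity.
      - intros n Hn. unfold vm. rewrite (proj2 (Nat.eqb_neq n (m - 1))) by lia. apply C_ext; simpl; ring. }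
    rewrite Ed, Ee.
    assert (Hm1 : INR (m - 1) = INR m - 1) by (rewrite minus_INR by lia; reflexivity).
    set (T := fun n => Cscal (D n) (Cmul Ci (Csub (Cpow (Cexpi th) n) (Cpow (Cconj (Cexpi th)) n)))).
    assert (S1 : infinite_sum (fun n => Cre (T n)) (Cre (T m))).
    { apply (inf_sum_single (fun n => Cre (T n)) m). intros n Hn; unfold T; rewrite HD0 by auto; simpl; ring. }
    assert (S2 : infinite_sum (fun n => Cim (T n)) (Cim (T m))).
    { apply (inf_sum_single (fun n => Cim (T n)) m). intros n Hn; unfold T; rewrite HD0 by auto; simpl; ring. }
    split.
    + match goal with |- infinite_sum _ ?v => replace v with (Cre (T m)) end; [exact S1|].
      unfold T. rewrite HDm, Cpow_expi, Cpow_conj_expi, Cconj_expi.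
      replace (Cmul (Cexpi (- th)) (Cscal 1 (Cexpi (- (INR (m - 1) * th))))) with (Cexpi (- (INR m * th))).
      2: { rewrite Cscal_CR. replace (CR 1) with (CR 1) by reflexivity.
           transitivity (Cmul (Cexpi (- th)) (Cexpi (- (INR (m - 1) * th)))).
           - rewrite Cexpi_add, Hm1. f_equal. ring.
           - apply C_ext; simpl; ring. }
      simpl. rewrite ?Hm1, ?cos_neg, ?sin_neg. field.
    + match goal with |- infinite_sum _ ?v => replace v with (Cim (T m)) end; [exact S2|].
      unfold T. rewrite HDm, Cpow_expi, Cpow_conj_expi. simpl. rewrite cos_neg. field.
  - intros H. pose proof (range_vanish s m D Hm H). rewrite HDm in H0.
    pose proof (INR_pos m ltac:(lia)). lra.
Qed.

Theorem proposition10p2 (s : R) (hs : 1 <= s) :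
  (forall (Om : R) (N : nat) (b : nat -> R) (th : R),
      derivable_pt_lim (fun t => F1 Om N (fun n => t * b n) th) 0
                       (Cre (Lformula Om N b (Cexpi th)))
      /\ Cim (Lformula Om N b (Cexpi th)) = 0)
  /\
  (forall Om : R,
      (forall b, in_Bs s b -> in_BLog (s - 1) (L_coef Om b))
      /\ (forall b, in_Bs s b -> forall eps, 0 < eps ->
            exists delta, 0 < delta /\
              forall c, in_Bs s c -> Bs_norm s (fun n => c n - b n) < delta ->
                BLog_norm (s - 1) (fun n => L_coef Om c n - L_coef Om b n) < eps))
  /\
  (forall Om : R, Om <> 0 ->
      ((exists b, in_Bs s b /\ (exists n, b n <> 0) /\ forall n, L_coef Om b n = 0)
       <-> exists m : nat, (2 <= m)%nat /\ Om = Omega1 m))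
  /\
  (forall m : nat, (2 <= m)%nat ->
      in_Bs s (vm m)
      /\ forall b, in_Bs s b ->
           ((forall n, L_coef (Omega1 m) b n = 0) <-> exists c : R, forall n, b n = c * vm m n))
  /\
  (forall m : nat, (2 <= m)%nat ->
      (forall g, RangeL s m g <-> (in_BLog (s - 1) g /\ g m = 0))
      /\ (forall g, in_BLog (s - 1) g ->
            (forall eps, 0 < eps -> exists h, RangeL s m h /\
                BLog_norm (s - 1) (fun n => h n - g n) < eps) ->
            RangeL s m g)
      /\ (exists e, in_BLog (s - 1) e /\ ~ RangeL s m e /\
            forall g, in_BLog (s - 1) g -> exists c : R, RangeL s m (fun n => g n - c * e n)))
  /\
  (forall m : nat, (2 <= m)%nat ->
      exists D : nat -> R,
        in_BLog (s - 1) D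
        /\ (forall eps, 0 < eps -> exists delta, 0 < delta /\
              forall Om, Om <> Omega1 m -> Rabs (Om - Omega1 m) < delta ->
                BLog_norm (s - 1)
                  (fun n => (L_coef Om (vm m) n - L_coef (Omega1 m) (vm m) n) / (Om - Omega1 m)
                            - D n) < eps)
        /\ (forall th : R,
              let w := Cexpi th in
              Cseries_to (fun n => Cscal (D n) (Cmul Ci (Csub (Cpow w n) (Cpow (Cconj w) n))))
                (CR (Cim (Cadd (Cconj (tp_deriv (m - 1) (vm m) w))
                               (Cmul (Cconj w) (tp_eval (m - 1) (vm m) w))))))
        /\ ~ RangeL s m D).
Proof.
  split; [intros Om N b th; split; [apply deriv_main|apply Lim]|].
  split; [apply part1; auto|].
  split; [apply part2a; auto|].
  split; [apply part2b; auto|].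
  split; [apply part3; auto|].
  apply part4; auto.
Qed.
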